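(* Let $m/n\in(0,1/2]$, $k\in\{0,\dots,m-1\}$ and $\gamma\in\{A,B\}$ (with $\gamma=B$ if $k=0$). An element $d=((N_r),\pi,(A,B,C))$ of $\mathcal D_n$ equals $d(P)$ for some $P\in\mathcal P(m/n,k,\gamma)$ if and only if: (a) for all $r>0$: (i) $\pi_1(r,s)=r+_nm$ for all $s$, and $\pi_2(r,s)$ is increasing in $s$; (ii) $\pi_2(r,0)=0$; (b) for $r=0$: (i) $0\in\gamma$; (ii) $\pi_1(0,0)=k$; (iii) if $c$ is the unique element of $C$ then $\pi(0,c)=(m,0)$; (iv) $\pi_1(0,s)\in\{k,\dots,m\}$ for all $s$ and is increasing in $s$; (v) if $s_1<s_2$, $\pi_1(0,s_1)=\pi_1(0,s_2)$ and $s_1\in B\cup C$, then $s_2\in B$; (vi) if $s_1<s_2$, $\pi_1(0,s_1)=\pi_1(0,s_2)$ and $s_1,s_2\in A$ (resp. $s_1,s_2\in B$), then $\pi_2(0,s_1)>\pi_2(0,s_2)$ (resp. $\pi_2(0,s_1)<\pi_2(0,s_2)$).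
   Context: For $n\ge2$, $\Gamma_n$ is an $n$-star with edges $e_0,\dots,e_{n-1}$ (initial points of valence 1, final points meeting at a central vertex $v$, cyclically ordered by index). For $m/n\in(0,1/2]$ in lowest terms, $f_{m/n}\colon\Gamma_n\to\Gamma_n$ has $f_{m/n}(e_0)=e_0\bar e_1e_1\cdots\bar e_me_m$ and $f_{m/n}(e_r)=e_{r+_nm}$ for $r\ne0$, expanding uniformly away from preimages of vertices. A $\ast$-orbit is a periodic orbit $P$ of $f_{m/n}$ with $P\ne\{v\}$, $P\cap e_r\ne\emptyset$ for all $r$, $f_{m/n}(P\cap e_0)\not\subseteq e_m$, and $f_{m/n}(p_r)=p_{r+_nm}$ for all $r\ne0$, where $p_r$ is the point of $P\cap e_r$ closest to the initial point of $e_r$. The span $\Gamma_n^P$ is the smallest connected set containing $P$; the truncation is $f^P_{m/n}=r_P\circ f_{m/n}\colon\Gamma^P_n\to\Gamma^P_n$ where $r_P$ is the identity on $\Gamma^P_n$ and sends $x\notin\Gamma^P_n$ to the endpoint of $\Gamma^P_n$ on the edge containing $x$. $\mathcal D_n$ is the set of triples $((N_0,\dots,N_{n-1}),\pi,(A,B,C))$ with each $N_r$ a positive integer, $\pi$ a cyclic permutation of $\mathcal L=\{(r,s)\colon0\le r<n,\,0\le s<N_r\}$, and $(A,B,C)$ a partition of $\{0,\dots,N_0-1\}$ with $\#C=1$. For a $\ast$-orbit $P$, its data $d(P)$ is given by $N_r=\#(P\cap e_r)$; the points of $P\cap e_r$ are labelled $(r,0),\dots,(r,N_r-1)$ from the initial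 to the final point of $e_r$, and $\pi=f_{m/n}|_P$ in this labelling; $s\in A$, $B$ or $C$ according as $f^P_{m/n}$ is locally orientation-reversing, locally orientation-preserving, or not locally injective at $(0,s)$. $\mathcal P(m/n,k,\gamma)$ is the set of $\ast$-orbits with $f_{m/n}((0,0))\in e_k$ and $0\in\gamma$. Write $\tau_1,\tau_2$ for the projections of $\mathcal L$ to the first and second coordinates, $\pi_1=\tau_1\circ\pi$, $\pi_2=\tau_2\circ\pi$. *)

(* Defs.v *)
From Stdlib Require Import Reals Lra Lia Arith.
Open Scope R_scope.

(* A point is either the central vertex v ([Vc]) or the point of edge e_r
   at position t in [0,1): t = 0 is the initial (valence-1) point of e_r,
   and t -> 1 approaches the central vertex v (position 1). *)
Inductive pt : Type := Vc | Ed (r : nat) (t : R).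

Definition valid (n : nat) (p : pt) : Prop :=
  match p with Vc => True | Ed r t => (r < n)%nat /\ 0 <= t < 1 end.

Definition pos (p : pt) : R := match p with Vc => 1 | Ed _ t => t end.

Definition on_edge (r : nat) (p : pt) : Prop := p = Vc \/ exists t, p = Ed r t.

Definition mkpt (i : nat) (s : R) : pt :=
  if Req_EM_T s 1 then Vc else Ed i s.

Definition floorN (x : R) : nat := Z.to_nat (Int_part x).

(* f_{m/n}: e_r -> e_{r+_n m} isometrically for r <> 0; e_0 is cut into 2m+1
   equal pieces mapped linearly onto e_0, ebar_1, e_1, ..., ebar_m, e_m. *)
Definition fmap (n m : nat) (p : pt) : pt :=
  match p with
  | Vc => Vc
  | Ed O t =>
      let x := INR (2 * m + 1) * t in
      let j := floorN x in
      let u := x - INR j in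
      if Nat.eqb j 0 then Ed 0 u
      else if Nat.odd j then mkpt ((j + 1) / 2) (1 - u)
      else Ed (j / 2) u
  | Ed r t => mkpt ((r + m) mod n) t
  end.

Definition periodic_orbit (n m : nat) (P : pt -> Prop) : Prop :=
  exists x per, valid n x /\ (0 < per)%nat /\ Nat.iter per (fmap n m) x = x /\
    forall y, P y <-> exists j, y = Nat.iter j (fmap n m) x.

Definition is_first (P : pt -> Prop) (r : nat) (p : pt) : Prop :=
  P p /\ on_edge r p /\ forall q, P q -> on_edge r q -> pos p <= pos q.

Definition star_orbit (n m : nat) (P : pt -> Prop) : Prop :=
  periodic_orbit n m P /\
  ~ (forall y, P y <-> y = Vc) /\
  (forall r, (r < n)%nat -> exists p, P p /\ on_edge r p) /\
  (exists p, P p /\ on_edge 0 p /\ ~ on_edge m (fmap n m p)) /\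
  (forall r p, (0 < r < n)%nat -> is_first P r p ->
       is_first P ((r + m) mod n) (fmap n m p)).

Definition same_edge (p q : pt) : Prop :=
  exists r a b, p = Ed r a /\ q = Ed r b.

Definition on_seg_to_v (p x : pt) : Prop :=
  x = Vc \/ exists r a c, p = Ed r a /\ x = Ed r c /\ a <= c.

Definition between (p q x : pt) : Prop :=
  (exists r a b c, p = Ed r a /\ q = Ed r b /\ x = Ed r c /\
       Rmin a b <= c <= Rmax a b) \/
  (~ same_edge p q /\ (on_seg_to_v p x \/ on_seg_to_v q x)).

(* Gamma_n^P : smallest connected set containing P = union of arcs between
   points of P (the star is a tree) *)
Definition span (n : nat) (P : pt -> Prop) (x : pt) : Prop :=
  valid n x /\ (P x \/ exists p q, P p /\ P q /\ between p q x).

Definition endpoint_on_edge (n : nat) (P : pt -> Prop) (r : nat) (y : pt) : Prop :=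
  span n P y /\
  ((y = Vc /\ forall c, ~ span n P (Ed r c)) \/
   (exists t', y = Ed r t' /\ forall c, span n P (Ed r c) -> t' <= c)).

Definition retr (n : nat) (P : pt -> Prop) (x y : pt) : Prop :=
  (span n P x /\ y = x) \/
  (~ span n P x /\ exists r t, x = Ed r t /\ endpoint_on_edge n P r y).

Definition fP (n m : nat) (P : pt -> Prop) (x y : pt) : Prop :=
  span n P x /\ retr n P (fmap n m x) y.

(* local behaviour of f^P at a point p = (0,t0) of e_0, w.r.t. the
   orientations of the edges (initial point -> v) *)
Definition loc_pres (n m : nat) (P : pt -> Prop) (p : pt) : Prop :=
  exists t0, p = Ed 0 t0 /\ exists delta, 0 < delta /\ exists j,
    forall t t' y y', span n P (Ed 0 t) -> span n P (Ed 0 t') ->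
      Rabs (t - t0) < delta -> Rabs (t' - t0) < delta -> t < t' ->
      fP n m P (Ed 0 t) y -> fP n m P (Ed 0 t') y' ->
      exists a b, y = Ed j a /\ y' = Ed j b /\ a < b.

Definition loc_rev (n m : nat) (P : pt -> Prop) (p : pt) : Prop :=
  exists t0, p = Ed 0 t0 /\ exists delta, 0 < delta /\ exists j,
    forall t t' y y', span n P (Ed 0 t) -> span n P (Ed 0 t') ->
      Rabs (t - t0) < delta -> Rabs (t' - t0) < delta -> t < t' ->
      fP n m P (Ed 0 t) y -> fP n m P (Ed 0 t') y' ->
      exists a b, y = Ed j a /\ y' = Ed j b /\ a > b.

Definition loc_noninj (n m : nat) (P : pt -> Prop) (p : pt) : Prop :=
  exists t0, p = Ed 0 t0 /\ forall delta, 0 < delta ->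
    exists t t' y, span n P (Ed 0 t) /\ span n P (Ed 0 t') /\
      Rabs (t - t0) < delta /\ Rabs (t' - t0) < delta /\ t <> t' /\
      fP n m P (Ed 0 t) y /\ fP n m P (Ed 0 t') y.

Inductive cls : Type := cA | cB | cC.

Definition behaves (n m : nat) (P : pt -> Prop) (g : cls) (p : pt) : Prop :=
  match g with
  | cA => loc_rev n m P p
  | cB => loc_pres n m P p
  | cC => loc_noninj n m P p
  end.

(* N r = N_r (relevant for r < n); pi is the permutation of
   L = {(r,s) : r < n, s < N_r}; lab s in {cA,cB,cC} says whether s is in
   A, B or C (relevant for s < N_0). Values outside L are irrelevant. *)
Record data : Type := Data { dN : nat -> nat; dpi : nat * nat -> nat * nat;
                             dlab : nat -> cls }.

Definition inL (n : nat) (d : data) (x : nat * nat) : Prop :=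
  (fst x < n)%nat /\ (snd x < dN d (fst x))%nat.

Definition in_Dn (n : nat) (d : data) : Prop :=
  (forall r, (r < n)%nat -> (0 < dN d r)%nat) /\
  (forall x, inL n d x -> inL n d (dpi d x)) /\
  (forall x y, inL n d x -> inL n d y -> dpi d x = dpi d y -> x = y) /\
  (forall x y, inL n d x -> inL n d y -> exists j, Nat.iter j (dpi d) x = y) /\
  (exists c, (c < dN d 0%nat)%nat /\ dlab d c = cC /\
     forall c', (c' < dN d 0%nat)%nat -> dlab d c' = cC -> c' = c).

(* d = d(P): lbl r s is the point labelled (r,s) *)
Definition data_of (n m : nat) (P : pt -> Prop) (d : data) : Prop :=
  exists lbl : nat -> nat -> pt,
    (forall r s, (r < n)%nat -> (s < dN d r)%nat ->
        P (lbl r s) /\ exists t, lbl r s = Ed r t) /\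
    (forall r s s', (r < n)%nat -> (s < s')%nat -> (s' < dN d r)%nat ->
        pos (lbl r s) < pos (lbl r s')) /\
    (forall r y, (r < n)%nat -> P y -> on_edge r y ->
        exists s, (s < dN d r)%nat /\ y = lbl r s) /\
    (forall r s, (r < n)%nat -> (s < dN d r)%nat ->
        fmap n m (lbl r s) = lbl (fst (dpi d (r, s))) (snd (dpi d (r, s)))) /\
    (forall s, (s < dN d 0%nat)%nat -> forall g,
        dlab d s = g <-> behaves n m P g (lbl 0%nat s)).

Definition in_calP (n m k : nat) (g : cls) (P : pt -> Prop) : Prop :=
  star_orbit n m P /\
  forall p, is_first P 0 p -> on_edge k (fmap n m p) /\ behaves n m P g p.

Definition cond_ab (n m k : nat) (g : cls) (d : data) : Prop :=
  let N := dN d in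
  let pi1 x := fst (dpi d x) in
  let pi2 x := snd (dpi d x) in
  (forall r, (0 < r < n)%nat ->
     (forall s, (s < N r)%nat -> pi1 (r, s) = ((r + m) mod n)%nat) /\
     (forall s1 s2, (s1 < s2)%nat -> (s2 < N r)%nat -> (pi2 (r, s1) < pi2 (r, s2))%nat) /\
     pi2 (r, 0%nat) = 0%nat) /\
  dlab d 0%nat = g /\
  pi1 (0%nat, 0%nat) = k /\
  (forall c, (c < N 0%nat)%nat -> dlab d c = cC -> dpi d (0%nat, c) = (m, 0%nat)) /\
  (forall s, (s < N 0%nat)%nat -> (k <= pi1 (0%nat, s) <= m)%nat) /\
  (forall s1 s2, (s1 < s2)%nat -> (s2 < N 0%nat)%nat -> (pi1 (0%nat, s1) <= pi1 (0%nat, s2))%nat) /\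
  (forall s1 s2, (s1 < s2)%nat -> (s2 < N 0%nat)%nat -> pi1 (0%nat, s1) = pi1 (0%nat, s2) ->
      (dlab d s1 = cB \/ dlab d s1 = cC) -> dlab d s2 = cB) /\
  (forall s1 s2, (s1 < s2)%nat -> (s2 < N 0%nat)%nat -> pi1 (0%nat, s1) = pi1 (0%nat, s2) ->
      (dlab d s1 = cA -> dlab d s2 = cA -> (pi2 (0%nat, s1) > pi2 (0%nat, s2))%nat) /\
      (dlab d s1 = cB -> dlab d s2 = cB -> (pi2 (0%nat, s1) < pi2 (0%nat, s2))%nat)).

(* Main.v *)
Require Import Defs.
From Stdlib Require Import Reals Lra Lia Arith ZArith Classical ClassicalEpsilon.

Module MA.
Open Scope R_scope.

Lemma half_spec (q : nat) : (2 * (q / 2) <= q < 2 * (q / 2) + 2)%nat.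
Proof. pose proof (Nat.div_mod q 2). pose proof (Nat.mod_upper_bound q 2). lia. Qed.

Lemma mod_small' (a n : nat) : (a < n)%nat -> (a mod n = a)%nat.
Proof. intros. apply Nat.mod_small; auto. Qed.

Lemma mod_big (a n : nat) : (n <= a < 2 * n)%nat -> (a mod n = a - n)%nat.
Proof. intros. symmetry. apply (Nat.mod_unique a n 1); lia. Qed.

Definition MM (m : nat) : R := INR (2 * m + 1).
Definition edge (p : nat) : nat := ((p + 1) / 2)%nat.
Definition aff (m p : nat) (t : R) : R :=
  if Nat.odd p then INR p + 1 - MM m * t else MM m * t - INR p.

Lemma MM_ge3 m : (0 < m)%nat -> 3 <= MM m.
Proof. intros. unfold MM. replace 3 with (INR 3) by (simpl; lra). apply le_INR. lia. Qed.

Lemma MM_S m : MM m = 2 * INR m + 1.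
Proof. unfold MM. rewrite plus_INR, mult_INR. simpl. lra. Qed.

Lemma floorN_spec x : 0 <= x -> INR (floorN x) <= x < INR (floorN x) + 1.
Proof.
  intros Hx. unfold floorN. destruct (base_Int_part x) as [H1 H2].
  assert (Hz : (0 <= Int_part x)%Z).
  { assert (IZR (Int_part x) > -1) by lra. apply lt_IZR in H. lia. }
  rewrite INR_IZR_INZ, Z2Nat.id by exact Hz. lra.
Qed.

Lemma floorN_unique x p : INR p <= x < INR p + 1 -> floorN x = p.
Proof.
  intros [H1 H2]. unfold floorN, Int_part.
  assert (Hu : (Z.of_nat p + 1)%Z = up x).
  { apply tech_up; rewrite plus_IZR, <- INR_IZR_INZ; simpl; lra. }
  rewrite <- Hu. replace (Z.of_nat p + 1 - 1)%Z with (Z.of_nat p) by lia.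
  apply Nat2Z.id.
Qed.

Lemma odd_cases p : (Nat.odd p = true /\ exists q, p = 2*q+1)%nat \/ (Nat.odd p = false /\ exists q, p = 2*q)%nat.
Proof.
  destruct (Nat.Even_or_Odd p) as [[q Hq]|[q Hq]].
  - right. split; [|eauto]. subst. rewrite Nat.odd_mul. reflexivity.
  - left. split; [|eauto]. apply Nat.odd_spec. exists q. lia.
Qed.

Lemma fmap_e0 n m p t : (p <= 2 * m)%nat -> INR p < MM m * t < INR p + 1 ->
  fmap n m (Ed 0 t) = Ed (edge p) (aff m p t).
Proof.
  intros Hp Ht. unfold fmap. fold (MM m).
  rewrite (floorN_unique _ p) by lra. unfold aff, edge.
  destruct (odd_cases p) as [[Ho [q Hq]]|[Ho [q Hq]]]; rewrite Ho.
  - assert (Hne : Nat.eqb p 0 = false) by (apply Nat.eqb_neq; lia). rewrite Hne.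
    unfold mkpt. destruct (Req_EM_T (1 - (MM m * t - INR p)) 1) as [E|E]; [lra|].
    f_equal. lra.
  - destruct (Nat.eqb p 0) eqn:E.
    + apply Nat.eqb_eq in E. assert (q = 0)%nat by lia. subst. reflexivity.
    + subst. f_equal. pose proof (half_spec (2*q)). pose proof (half_spec (2*q+1)). lia.
Qed.

Lemma fmap_e0_bd n m p t : INR p = MM m * t -> (p <= 2 * m)%nat ->
  fmap n m (Ed 0 t) = (if Nat.eqb p 0 then Ed 0 0 else if Nat.odd p then Vc else Ed (p/2) 0).
Proof.
  intros Ht Hp. unfold fmap. fold (MM m).
  rewrite (floorN_unique _ p) by lra.
  destruct (Nat.eqb p 0); [f_equal; lra|].
  destruct (Nat.odd p).
  - unfold mkpt. destruct (Req_EM_T (1 - (MM m * t - INR p)) 1) as [E|E]; [reflexivity|lra].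
  - f_equal; lra.
Qed.

Lemma fmap_er n m r t : (0 < r)%nat -> t <> 1 -> fmap n m (Ed r t) = Ed ((r + m) mod n) t.
Proof.
  intros Hr Ht. destruct r; [lia|]. simpl. unfold mkpt.
  destruct (Req_EM_T t 1); [contradiction|reflexivity].
Qed.

End MA.
Import MA.

Module MB.
Open Scope R_scope.

Section Config.
Variables (n m : nat) (N : nat -> nat) (X : nat -> nat -> R) (P : pt -> Prop).
Hypothesis Hn : (2 <= n)%nat.
Hypothesis HN : forall r, (r < n)%nat -> (0 < N r)%nat.
Hypothesis HX01 : forall r s, (r < n)%nat -> (s < N r)%nat -> 0 <= X r s < 1.
Hypothesis HXinc : forall r s s', (r < n)%nat -> (s < s')%nat -> (s' < N r)%nat -> X r s < X r s'.
Hypothesis HP : forall y, P y <-> exists r s, (r < n)%nat /\ (s < N r)%nat /\ y = Ed r (X r s).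

Lemma X0_le r s : (r < n)%nat -> (s < N r)%nat -> X r 0 <= X r s.
Proof.
  intros. destruct s. lra. left. apply HXinc; lia.
Qed.

Lemma span_char y : span n P y <-> y = Vc \/ exists r c, y = Ed r c /\ (r < n)%nat /\ X r 0 <= c < 1.
Proof.
  split.
  - intros [Hv [HPy | [p [q [Hp [Hq Hb]]]]]].
    + apply HP in HPy. destruct HPy as [r [s [Hr [Hs ->]]]]. right. exists r, (X r s).
      repeat split; auto. apply X0_le; auto. apply HX01; auto.
    + apply HP in Hp. destruct Hp as [r [s [Hr [Hs ->]]]].
      apply HP in Hq. destruct Hq as [r' [s' [Hr' [Hs' ->]]]].
      destruct Hb as [[r1 [a [b [c [E1 [E2 [E3 Hc]]]]]]] | [_ [Hs1|Hs1]]].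
      * inversion E1; inversion E2; subst. right. exists r1, c. repeat split; auto.
        -- pose proof (X0_le r1 s Hr Hs). pose proof (X0_le r1 s' Hr' Hs').
           pose proof (Rmin_l (X r1 s) (X r1 s')). pose proof (Rmin_r (X r1 s) (X r1 s')).
           destruct (Rle_dec (X r1 s) (X r1 s')); [rewrite Rmin_left in Hc by lra|rewrite Rmin_right in Hc by lra]; lra.
        -- simpl in Hv. lra.
      * unfold on_seg_to_v in Hs1. destruct Hs1 as [->|[r1 [a [c [E1 [E2 Hc]]]]]]; [now left|].
        inversion E1; subst. right. exists r1, c. repeat split; auto.
        pose proof (X0_le r1 s Hr Hs). lra. simpl in Hv; lra.
      * unfold on_seg_to_v in Hs1. destruct Hs1 as [->|[r1 [a [c [E1 [E2 Hc]]]]]]; [now left|].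
        inversion E1; subst. right. exists r1, c. repeat split; auto.
        pose proof (X0_le r1 s' Hr' Hs'). lra. simpl in Hv; lra.
  - intros [-> | [r [c [-> [Hr Hc]]]]].
    + split. simpl; auto. right. exists (Ed 0 (X 0 0)), (Ed 1 (X 1 0)).
      split. apply HP; exists 0%nat, 0%nat; repeat split; try lia; apply HN; lia.
      split. apply HP; exists 1%nat, 0%nat; repeat split; try lia; apply HN; lia.
      right. split. unfold same_edge. intros [r [a [b [E1 E2]]]]. inversion E1; inversion E2; subst; discriminate.
      left. left. reflexivity.
    + set (r' := if Nat.eqb r 0 then 1%nat else 0%nat).
      assert (Hr' : (r' < n)%nat /\ r' <> r).
      { unfold r'. destruct (Nat.eqb r 0) eqn:E; [apply Nat.eqb_eq in E|apply Nat.eqb_neq in E]; lia. }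
      split. simpl. pose proof (HX01 r 0 Hr (HN r Hr)). split; [auto|lra].
      right. exists (Ed r (X r 0)), (Ed r' (X r' 0)).
      split. apply HP; exists r, 0%nat; repeat split; auto.
      split. apply HP; exists r', 0%nat; repeat split; try tauto. apply HN; tauto.
      right. split. unfold same_edge. intros [r1 [a [b [E1 E2]]]]. inversion E1. inversion E2. destruct Hr' as [_ Hne]. congruence.
      left. unfold on_seg_to_v. right. exists r, (X r 0), c. repeat split; auto. lra.
Qed.

Lemma span_Ed r c : (r < n)%nat -> X r 0 <= c < 1 -> span n P (Ed r c).
Proof. intros. apply span_char. right. exists r, c. auto. Qed.

Lemma span_Ed_inv r c : span n P (Ed r c) -> (r < n)%nat /\ X r 0 <= c < 1.
Proof.
  intros H. apply span_char in H. destruct H as [H|[r1 [c1 [E H]]]]; [discriminate|].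
  inversion E; subst; auto.
Qed.

Lemma fP_char x j u y : span n P x -> fmap n m x = Ed j u -> (j < n)%nat -> 0 <= u < 1 ->
  (fP n m P x y <-> y = Ed j (Rmax u (X j 0))).
Proof.
  intros Hx Hf Hj Hu. unfold fP. rewrite Hf. split.
  - intros [_ [[Hs ->] | [Hns [r [t [E [Hy Hend]]]]]]].
    + apply span_Ed_inv in Hs. rewrite Rmax_left by lra. reflexivity.
    + inversion E; subst. destruct Hend as [[-> H]|[t' [-> Ht']]].
      * exfalso. apply (H (X r 0)). apply span_Ed; auto. pose proof (HX01 r 0 Hj (HN r Hj)); lra.
      * apply span_Ed_inv in Hy. assert (t' <= X r 0).
        { apply Ht'. apply span_Ed; auto. pose proof (HX01 r 0 Hj (HN r Hj)); lra. }
        assert (t < X r 0). { destruct (Rlt_dec t (X r 0)); auto. exfalso; apply Hns; apply span_Ed; auto; lra. }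
        rewrite Rmax_right by lra. f_equal. lra.
  - intros ->. split; auto. destruct (Rle_dec (X j 0) u).
    + left. rewrite Rmax_left by lra. split; auto. apply span_Ed; auto; lra.
    + right. split. intros Hs; apply span_Ed_inv in Hs; lra.
      exists j, u. split; auto. rewrite Rmax_right by lra.
      pose proof (HX01 j 0 Hj (HN j Hj)).
      split. apply span_Ed; auto; lra.
      right. exists (X j 0). split; auto. intros c Hc. apply span_Ed_inv in Hc; lra.
Qed.


Lemma MM_pos : 0 < MM m.
Proof. unfold MM. apply lt_0_INR. lia. Qed.

Lemma aff_range p t : INR p < MM m * t < INR p + 1 -> 0 < aff m p t < 1.
Proof. intros. unfold aff. destruct (Nat.odd p); lra. Qed.

Lemma aff_diff p t t' : aff m p t' - aff m p t = (if Nat.odd p then - (MM m * (t' - t)) else MM m * (t' - t)).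
Proof. unfold aff. destruct (Nat.odd p); lra. Qed.

Lemma inpiece_lt1 p t : (p <= 2 * m)%nat -> MM m * t < INR p + 1 -> t < 1.
Proof.
  intros Hp H. assert (INR p + 1 <= MM m).
  { unfold MM. rewrite <- S_INR. apply le_INR. lia. }
  pose proof MM_pos. apply (Rmult_lt_reg_l (MM m)); lra.
Qed.

Lemma near_inpiece p t0 : INR p < MM m * t0 < INR p + 1 ->
  exists e, 0 < e /\ forall t, Rabs (t - t0) < e -> INR p < MM m * t < INR p + 1.
Proof.
  intros H. pose proof MM_pos.
  exists (Rmin (MM m * t0 - INR p) (INR p + 1 - MM m * t0) / MM m). split.
  - apply Rdiv_lt_0_compat; auto. apply Rmin_glb_lt; lra.
  - intros t Ht. pose proof (Rmin_l (MM m * t0 - INR p) (INR p + 1 - MM m * t0)).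
    pose proof (Rmin_r (MM m * t0 - INR p) (INR p + 1 - MM m * t0)).
    set (mn := Rmin (MM m * t0 - INR p) (INR p + 1 - MM m * t0)) in *.
    assert (Hm : MM m * Rabs (t - t0) < mn).
    { apply (Rmult_lt_compat_l (MM m)) in Ht; auto. unfold Rdiv in Ht.
      replace (MM m * (mn * / MM m)) with mn in Ht by (field; lra). exact Ht. }
    destruct (Rabs_def2 _ _ (Rle_lt_trans _ _ _ (Rle_abs _) (Rle_lt_trans _ _ _ (Rle_refl _) (Rlt_le_trans _ _ _ (Rabs_pos_lt _ _) (Rle_refl _)))) ) as [_ _] || idtac.
    pose proof (Rle_abs (t - t0)). pose proof (Rle_abs (- (t - t0))). rewrite Rabs_Ropp in H4.
    split; nra.
Qed.

Lemma first_char_cfg r q : (r < n)%nat -> (is_first P r q <-> q = Ed r (X r 0)).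
Proof.
  intros Hr. split.
  - intros [HPq [Hon Hmin]]. apply HP in HPq. destruct HPq as [r' [s' [Hr' [Hs' ->]]]].
    destruct Hon as [E|[t E]]; [discriminate|]. inversion E. subst r'.
    destruct s' as [|s']; auto. exfalso.
    assert (H0 : P (Ed r (X r 0))) by (apply HP; exists r, 0%nat; repeat split; auto; apply HN; auto).
    assert (Hle : X r (S s') <= X r 0) by (apply (Hmin _ H0); right; exists (X r 0); reflexivity).
    assert (X r 0 < X r (S s')) by (apply HXinc; auto; lia). lra.
  - intros ->. split. apply HP; exists r, 0%nat; repeat split; auto; apply HN; auto.
    split. right. eexists. reflexivity.
    intros q Hq Hon. apply HP in Hq. destruct Hq as [r' [s' [Hr' [Hs' ->]]]].
    destruct Hon as [E|[t E]]; [discriminate|]. inversion E. subst r'. simpl. apply X0_le; auto.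
Qed.

Lemma idx_order r a b : (r < n)%nat -> (a < N r)%nat -> (b < N r)%nat -> X r a < X r b -> (a < b)%nat.
Proof.
  intros Hr Ha Hb H. destruct (Nat.lt_ge_cases a b); auto. exfalso.
  destruct (Nat.eq_dec a b). subst; lra. assert (X r b < X r a) by (apply HXinc; auto; lia). lra.
Qed.

Section Beh.
Variables (s p : nat).
Hypothesis Hs : (s < N 0)%nat.
Hypothesis Hp : (p <= 2 * m)%nat.
Hypothesis Hpc : INR p < MM m * X 0 s < INR p + 1.
Hypothesis Hjn : (edge p < n)%nat.

Let t0 := X 0 s.
Let j := edge p.

Lemma fP_loc t y : INR p < MM m * t < INR p + 1 -> span n P (Ed 0 t) ->
  (fP n m P (Ed 0 t) y <-> y = Ed j (Rmax (aff m p t) (X j 0))).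
Proof.
  intros Ht Hsp. apply fP_char; auto. apply fmap_e0; auto.
  pose proof (aff_range p t Ht). lra.
Qed.

Lemma t0_span : span n P (Ed 0 t0).
Proof. apply span_Ed. lia. split. apply X0_le; auto; lia. apply HX01; auto; lia. Qed.

Lemma beh_inj : (X j 0 < aff m p t0) ->
  (loc_pres n m P (Ed 0 t0) <-> Nat.odd p = false) /\ (loc_rev n m P (Ed 0 t0) <-> Nat.odd p = true) /\ ~ loc_noninj n m P (Ed 0 t0).
Proof.
  intros Hlt. pose proof MM_pos as HM.
  destruct (near_inpiece p t0 Hpc) as [e1 [He1 Hin]].
  set (e := Rmin e1 ((aff m p t0 - X j 0) / MM m)).
  assert (He : 0 < e). { apply Rmin_glb_lt; auto. apply Rdiv_lt_0_compat; lra. }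
  assert (Hloc : forall t, Rabs (t - t0) < e -> INR p < MM m * t < INR p + 1 /\ X j 0 < aff m p t).
  { intros t Ht. split. apply Hin. eapply Rlt_le_trans; [exact Ht|apply Rmin_l].
    pose proof (aff_diff p t0 t).
    assert (Ht2 : Rabs (t - t0) < (aff m p t0 - X j 0) / MM m) by (eapply Rlt_le_trans; [exact Ht|apply Rmin_r]).
    assert (Ht3 : MM m * Rabs (t - t0) < aff m p t0 - X j 0).
    { apply (Rmult_lt_compat_l (MM m)) in Ht2; auto. unfold Rdiv in Ht2.
      replace (MM m * ((aff m p t0 - X j 0) * / MM m)) with (aff m p t0 - X j 0) in Ht2 by (field; lra). exact Ht2. }
    pose proof (Rle_abs (t - t0)). pose proof (Rle_abs (- (t - t0))). rewrite Rabs_Ropp in H1.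
    destruct (Nat.odd p); nra. }
  assert (HfP : forall t y, Rabs (t - t0) < e -> span n P (Ed 0 t) -> fP n m P (Ed 0 t) y -> y = Ed j (aff m p t)).
  { intros t y Ht Hsp Hf. destruct (Hloc t Ht) as [H1 H2]. apply (fP_loc t y H1 Hsp) in Hf. rewrite Hf.
    rewrite Rmax_left by lra. reflexivity. }
  assert (HfP2 : forall t, Rabs (t - t0) < e -> span n P (Ed 0 t) -> fP n m P (Ed 0 t) (Ed j (aff m p t))).
  { intros t Ht Hsp. destruct (Hloc t Ht) as [H1 H2]. apply (fP_loc t _ H1 Hsp). rewrite Rmax_left by lra. reflexivity. }
  assert (Hw : forall eps, 0 < eps -> eps < e -> Rabs (t0 + eps - t0) < e /\ span n P (Ed 0 (t0 + eps))).
  { intros eps H1 H2. replace (t0 + eps - t0) with eps by ring. rewrite Rabs_right by lra. split; auto.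
    destruct (Hloc (t0 + eps)) as [H3 _]. replace (t0 + eps - t0) with eps by ring. rewrite Rabs_right by lra. auto.
    apply span_Ed. lia. split. unfold t0. pose proof (X0_le 0 s ltac:(lia) Hs). lra.
    eapply inpiece_lt1; eauto. apply H3. }
  assert (H0 : Rabs (t0 - t0) < e) by (rewrite Rminus_diag, Rabs_R0; auto).
  assert (Hsp0 := t0_span).
  split; [|split].
  - split.
    + intros [t1 [E [d [Hd [j' H]]]]]. inversion E. subst t1.
      set (eps := Rmin d e / 2).
      assert (Heps : 0 < eps /\ eps < e /\ eps < d).
      { unfold eps. pose proof (Rmin_l d e). pose proof (Rmin_r d e). pose proof (Rmin_glb_lt d e 0 Hd He). lra. }
      destruct (Hw eps) as [Hw1 Hw2]; try lra.
      assert (P1: Rabs (t0 - t0) < d) by (rewrite Rminus_diag, Rabs_R0; auto).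
      assert (P2: Rabs (t0 + eps - t0) < d) by (replace (t0 + eps - t0) with eps by ring; rewrite Rabs_right; lra).
      assert (P3: t0 < t0 + eps) by lra.
      destruct (H _ _ _ _ Hsp0 Hw2 P1 P2 P3 (HfP2 t0 H0 Hsp0) (HfP2 (t0+eps) Hw1 Hw2)) as [a [b [E1 [E2 Hab]]]].
      inversion E1; inversion E2; subst. pose proof (aff_diff p t0 (t0 + eps)).
        destruct (Nat.odd p); auto. nra.
    + intros Ho. exists t0. split; auto. exists e. split; auto. exists j.
      intros t t' y y' Hs1 Hs2 Ht Ht' Htt Hf Hf'. apply HfP in Hf; auto. apply HfP in Hf'; auto.
      subst. exists (aff m p t), (aff m p t'). repeat split. pose proof (aff_diff p t t'). rewrite Ho in H. nra.
  - split.
    + intros [t1 [E [d [Hd [j' H]]]]]. inversion E. subst t1.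
      set (eps := Rmin d e / 2).
      assert (Heps : 0 < eps /\ eps < e /\ eps < d).
      { unfold eps. pose proof (Rmin_l d e). pose proof (Rmin_r d e). pose proof (Rmin_glb_lt d e 0 Hd He). lra. }
      destruct (Hw eps) as [Hw1 Hw2]; try lra.
      assert (P1: Rabs (t0 - t0) < d) by (rewrite Rminus_diag, Rabs_R0; auto).
      assert (P2: Rabs (t0 + eps - t0) < d) by (replace (t0 + eps - t0) with eps by ring; rewrite Rabs_right; lra).
      assert (P3: t0 < t0 + eps) by lra.
      destruct (H _ _ _ _ Hsp0 Hw2 P1 P2 P3 (HfP2 t0 H0 Hsp0) (HfP2 (t0+eps) Hw1 Hw2)) as [a [b [E1 [E2 Hab]]]].
      inversion E1; inversion E2; subst. pose proof (aff_diff p t0 (t0 + eps)).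
        destruct (Nat.odd p); auto. nra.
    + intros Ho. exists t0. split; auto. exists e. split; auto. exists j.
      intros t t' y y' Hs1 Hs2 Ht Ht' Htt Hf Hf'. apply HfP in Hf; auto. apply HfP in Hf'; auto.
      subst. exists (aff m p t), (aff m p t'). repeat split. pose proof (aff_diff p t t'). rewrite Ho in H. nra.
  - intros [t1 [E H]]. inversion E. subst t1. destruct (H e He) as [t [t' [y [Hs1 [Hs2 [Ht [Ht' [Hne [Hf Hf']]]]]]]]].
    apply HfP in Hf; auto. apply HfP in Hf'; auto. subst.
    assert (Ha: aff m p t = aff m p t') by (inversion Hf'; auto).
    pose proof (aff_diff p t t') as Hd. rewrite Ha, Rminus_diag in Hd. apply Hne.
    destruct (Nat.odd p).
    + assert (Hz: MM m * (t' - t) = 0) by lra. apply Rmult_integral in Hz. destruct Hz; lra.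
    + assert (Hz: MM m * (t' - t) = 0) by lra. apply Rmult_integral in Hz. destruct Hz; lra.
Qed.

Lemma beh_fold_wit : aff m p t0 = X j 0 -> (Nat.odd p = true \/ (0 < s)%nat) ->
  forall d, 0 < d -> exists t t', t < t' /\ Rabs (t - t0) < d /\ Rabs (t' - t0) < d /\
    span n P (Ed 0 t) /\ span n P (Ed 0 t') /\
    fP n m P (Ed 0 t) (Ed j (X j 0)) /\ fP n m P (Ed 0 t') (Ed j (X j 0)).
Proof.
  intros Heq Hside d Hd. pose proof MM_pos as HM.
  destruct (near_inpiece p t0 Hpc) as [e1 [He1 Hin]].
  pose proof (X0_le 0 s ltac:(lia) Hs) as H00. fold t0 in H00.
  assert (Ht01 : t0 < 1) by (apply (HX01 0 s); auto; lia).
  destruct (Nat.odd p) eqn:Ho.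
  - set (eps := Rmin d e1 / 2).
    assert (Heps : 0 < eps /\ eps < e1 /\ eps < d).
    { unfold eps. pose proof (Rmin_l d e1). pose proof (Rmin_r d e1). pose proof (Rmin_glb_lt d e1 0 Hd He1). lra. }
    assert (Hpt : forall x, 0 < x <= eps -> Rabs (t0 + x - t0) < d /\ span n P (Ed 0 (t0 + x)) /\ fP n m P (Ed 0 (t0 + x)) (Ed j (X j 0))).
    { intros x Hx. replace (t0 + x - t0) with x by ring. rewrite Rabs_right by lra.
      assert (Hi : INR p < MM m * (t0 + x) < INR p + 1).
      { apply Hin. replace (t0 + x - t0) with x by ring. rewrite Rabs_right by lra. lra. }
      assert (Hsp : span n P (Ed 0 (t0 + x))).
      { apply span_Ed. lia. split. lra. eapply inpiece_lt1; eauto. apply Hi. }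
      split. lra. split. auto. apply (fP_loc _ _ Hi Hsp). f_equal.
      pose proof (aff_diff p t0 (t0 + x)). rewrite Ho in H. rewrite Rmax_right. reflexivity. nra. }
    exists (t0 + eps / 2), (t0 + eps).
    destruct (Hpt (eps / 2)) as [A1 [A2 A3]]; [lra|]. destruct (Hpt eps) as [B1 [B2 B3]]; [lra|].
    refine (conj _ (conj A1 (conj B1 (conj A2 (conj B2 (conj A3 B3)))))); lra.
  - destruct Hside as [Hside|Hside]; [discriminate|].
    assert (H0s : X 0 0 < t0) by (apply HXinc; auto; lia).
    set (eps := Rmin (Rmin d e1) (t0 - X 0 0) / 2).
    assert (Heps : 0 < eps /\ eps < e1 /\ eps < d /\ eps < t0 - X 0 0).
    { unfold eps. pose proof (Rmin_l d e1). pose proof (Rmin_r d e1). pose proof (Rmin_glb_lt d e1 0 Hd He1).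
      pose proof (Rmin_l (Rmin d e1) (t0 - X 0 0)). pose proof (Rmin_r (Rmin d e1) (t0 - X 0 0)).
      assert (0 < t0 - X 0 0) by lra.
      pose proof (Rmin_glb_lt (Rmin d e1) (t0 - X 0 0) 0 H1 H4). lra. }
    assert (Hpt : forall x, 0 < x <= eps -> Rabs (t0 - x - t0) < d /\ span n P (Ed 0 (t0 - x)) /\ fP n m P (Ed 0 (t0 - x)) (Ed j (X j 0))).
    { intros x Hx. replace (t0 - x - t0) with (- x) by ring. rewrite Rabs_Ropp, Rabs_right by lra.
      assert (Hi : INR p < MM m * (t0 - x) < INR p + 1).
      { apply Hin. replace (t0 - x - t0) with (- x) by ring. rewrite Rabs_Ropp, Rabs_right by lra. lra. }
      assert (Hsp : span n P (Ed 0 (t0 - x))).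
      { apply span_Ed. lia. split; lra. }
      split. lra. split. auto. apply (fP_loc _ _ Hi Hsp). f_equal.
      pose proof (aff_diff p t0 (t0 - x)). rewrite Ho in H. rewrite Rmax_right. reflexivity. nra. }
    exists (t0 - eps), (t0 - eps / 2).
    destruct (Hpt (eps / 2)) as [A1 [A2 A3]]; [lra|]. destruct (Hpt eps) as [B1 [B2 B3]]; [lra|].
    refine (conj _ (conj B1 (conj A1 (conj B2 (conj A2 (conj B3 A3)))))); lra.
Qed.

Lemma beh_fold : aff m p t0 = X j 0 -> (Nat.odd p = true \/ (0 < s)%nat) ->
  loc_noninj n m P (Ed 0 t0) /\ ~ loc_pres n m P (Ed 0 t0) /\ ~ loc_rev n m P (Ed 0 t0).
Proof.
  intros Heq Hside. pose proof (beh_fold_wit Heq Hside) as W.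
  split; [|split].
  - exists t0. split; auto. intros d Hd. destruct (W d Hd) as [t [t' [H1 [H2 [H3 [H4 [H5 [H6 H7]]]]]]]].
    exists t, t', (Ed j (X j 0)). refine (conj H4 (conj H5 (conj H2 (conj H3 (conj _ (conj H6 H7)))))). lra.
  - intros [t1 [E [d [Hd [j' H]]]]]. inversion E. subst t1.
    destruct (W d Hd) as [t [t' [H1 [H2 [H3 [H4 [H5 [H6 H7]]]]]]]].
    destruct (H t t' _ _ H4 H5 H2 H3 H1 H6 H7) as [a [b [E1 [E2 Hab]]]].
    rewrite E1 in E2. inversion E2. lra.
  - intros [t1 [E [d [Hd [j' H]]]]]. inversion E. subst t1.
    destruct (W d Hd) as [t [t' [H1 [H2 [H3 [H4 [H5 [H6 H7]]]]]]]].
    destruct (H t t' _ _ H4 H5 H2 H3 H1 H6 H7) as [a [b [E1 [E2 Hab]]]].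
    rewrite E1 in E2. inversion E2. lra.
Qed.

End Beh.

End Config.

End MB.
Import MB.

Module MC.
Open Scope R_scope.

Lemma exists_min (Q : nat -> Prop) : (exists k, Q k) -> exists k, Q k /\ forall k', Q k' -> (k <= k')%nat.
Proof.
  intros [k Hk]. revert Hk. induction k as [k IH] using lt_wf_ind. intros Hk.
  destruct (classic (exists k', Q k' /\ (k' < k)%nat)) as [[k' [H1 H2]]|H].
  - exact (IH k' H2 H1).
  - exists k. split; auto. intros k' Hk'. destruct (Nat.lt_ge_cases k' k); auto. exfalso; eauto.
Qed.

Section Cyc.
Variables (n : nat) (d : data).
Hypothesis Hd : in_Dn n d.
Local Notation pi := (dpi d).
Local Notation L := (inL n d).

Lemma iter_L i z : L z -> L (Nat.iter i pi z).
Proof.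
  intros Hz. induction i; simpl; auto. destruct Hd as [_ [H _]]. apply H; auto.
Qed.

Lemma iter_inj i z z' : L z -> L z' -> Nat.iter i pi z = Nat.iter i pi z' -> z = z'.
Proof.
  intros Hz Hz'. induction i; simpl; auto. intros E. apply IHi.
  destruct Hd as [_ [_ [H _]]]. apply H; auto; apply iter_L; auto.
Qed.

Definition z0 : nat * nat := (0%nat, 0%nat).

Hypothesis Hn : (1 <= n)%nat.

Lemma z0_L : L z0.
Proof. unfold inL, z0. simpl. split. lia. destruct Hd as [H _]. apply H. lia. Qed.

Lemma cyc_reach z z' : L z -> L z' -> exists j, Nat.iter j pi z = z'.
Proof. destruct Hd as [_ [_ [_ [H _]]]]. auto. Qed.

Lemma period_ex : exists T, (0 < T)%nat /\ Nat.iter T pi z0 = z0 /\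
  (forall i i', (i < T)%nat -> (i' < T)%nat -> Nat.iter i pi z0 = Nat.iter i' pi z0 -> i = i') /\
  (forall z, L z -> exists i, (i < T)%nat /\ z = Nat.iter i pi z0).
Proof.
  assert (Hex : exists k, (0 < k)%nat /\ Nat.iter k pi z0 = z0).
  { destruct (cyc_reach (pi z0) z0) as [j Hj].
    - destruct Hd as [_ [H _]]. apply H. apply z0_L.
    - apply z0_L.
    - exists (S j). split. lia. rewrite Nat.iter_succ_r. auto. }
  destruct (exists_min _ Hex) as [T [[HT0 HT] Hmin]].
  exists T. split; auto. split; auto.
  assert (Hmul : forall q, Nat.iter (q * T) pi z0 = z0).
  { induction q; simpl; auto. rewrite Nat.iter_add, IHq. auto. }
  split.
  - intros i i' Hi Hi' E.
    assert (Hgen : forall a b, (a < b < T)%nat -> Nat.iter a pi z0 = Nat.iter b pi z0 -> False).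
    { intros a b Hab Eab. replace b with ((b - a) + a)%nat in Eab by lia.
      rewrite Nat.iter_add in Eab.
      assert (Hc : z0 = Nat.iter (b - a) pi z0).
      { apply (iter_inj a). apply z0_L. apply iter_L, z0_L. rewrite <- Nat.iter_add, Nat.add_comm, Nat.iter_add. exact Eab. }
      specialize (Hmin (b - a)%nat). lia || (assert (T <= b - a)%nat by (apply Hmin; split; [lia|auto]); lia). }
    destruct (Nat.lt_trichotomy i i') as [H|[H|H]]; auto; exfalso; eapply Hgen; eauto.
  - intros z Hz. destruct (cyc_reach z0 z (z0_L) Hz) as [a Ha].
    exists (a mod T)%nat. split. apply Nat.mod_upper_bound. lia.
    rewrite (Nat.div_mod a T) in Ha by lia. rewrite Nat.add_comm, Nat.iter_add in Ha.
    rewrite Nat.mul_comm, Hmul in Ha. auto.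
Qed.

Lemma per_ex : exists T, (0 < T)%nat /\ (forall z, L z -> Nat.iter T pi z = z) /\
  (forall z, L z -> exists k, (k < T)%nat /\ Nat.iter k pi z = z0).
Proof.
  destruct period_ex as [T [HT [HTz [_ Hall]]]].
  exists T. split; auto. split.
  - intros z Hz. destruct (Hall z Hz) as [i [Hi ->]].
    rewrite <- Nat.iter_add, Nat.add_comm, Nat.iter_add, HTz. reflexivity.
  - intros z Hz. destruct (Hall z Hz) as [i [Hi ->]].
    destruct i as [|i].
    + exists 0%nat. split; auto.
    + exists (T - S i)%nat. split. lia. rewrite <- Nat.iter_add. replace (T - S i + S i)%nat with T by lia. auto.
Qed.

End Cyc.

Lemma growth (U : Type) (phi : U -> U) (Q : U -> R) (good E0 : U -> Prop) (c : R) :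
  (forall u, good u -> 0 < Q u -> good (phi u) /\ Q u <= Q (phi u) /\ (E0 u -> c * Q u <= Q (phi u))) ->
  forall u, good u -> 0 < Q u -> 1 <= c -> forall i, good (Nat.iter i phi u) /\ Q u <= Q (Nat.iter i phi u) /\
    ((exists k, (k < i)%nat /\ E0 (Nat.iter k phi u)) -> c * Q u <= Q (Nat.iter i phi u)).
Proof.
  intros H u Hu HQ Hc i. induction i as [|i [IH1 [IH2 IH3]]].
  - simpl. split; auto. split. lra. intros [k [Hk _]]. lia.
  - rewrite Nat.iter_succ. destruct (H _ IH1 ltac:(lra)) as [H1 [H2 H3]]. split; auto. split. lra.
    intros [k' [Hk' HE]]. destruct (Nat.eq_dec k' i) as [->|Hne].
    + specialize (H3 HE). nra.
    + assert (c * Q u <= Q (Nat.iter i phi u)) by (apply IH3; exists k'; split; auto; lia). lra.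
Qed.

End MC.
Import MC.

Module MD.
Open Scope R_scope.

Section Rev.
Variables (n m k : nat) (g : cls) (d : data) (b c : nat).
Local Notation N := (dN d).
Local Notation pi := (dpi d).
Local Notation L := (inL n d).
Local Notation pi1 z := (fst (dpi d z)).
Local Notation pi2 z := (snd (dpi d z)).
Hypothesis Hm : (0 < m)%nat.
Hypothesis Hmn : (2 * m <= n)%nat.
Hypothesis Hk : (k < m)%nat.
Hypothesis Hg : g = cA \/ g = cB.
Hypothesis Hk0 : k = 0%nat -> g = cB.
Hypothesis HD : in_Dn n d.
Hypothesis Ha : forall r, (0 < r < n)%nat ->
     (forall s, (s < N r)%nat -> pi1 (r, s) = ((r + m) mod n)%nat) /\
     (forall s1 s2, (s1 < s2)%nat -> (s2 < N r)%nat -> (pi2 (r, s1) < pi2 (r, s2))%nat) /\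
     pi2 (r, 0%nat) = 0%nat.
Hypothesis Hb1 : dlab d 0%nat = g.
Hypothesis Hb2 : pi1 (0%nat, 0%nat) = k.
Hypothesis Hb3 : forall c, (c < N 0%nat)%nat -> dlab d c = cC -> pi (0%nat, c) = (m, 0%nat).
Hypothesis Hb4a : forall s, (s < N 0%nat)%nat -> (k <= pi1 (0%nat, s) <= m)%nat.
Hypothesis Hb4b : forall s1 s2, (s1 < s2)%nat -> (s2 < N 0%nat)%nat -> (pi1 (0%nat, s1) <= pi1 (0%nat, s2))%nat.
Hypothesis Hb5 : forall s1 s2, (s1 < s2)%nat -> (s2 < N 0%nat)%nat -> pi1 (0%nat, s1) = pi1 (0%nat, s2) ->
      (dlab d s1 = cB \/ dlab d s1 = cC) -> dlab d s2 = cB.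
Hypothesis Hb6 : forall s1 s2, (s1 < s2)%nat -> (s2 < N 0%nat)%nat -> pi1 (0%nat, s1) = pi1 (0%nat, s2) ->
      (dlab d s1 = cA -> dlab d s2 = cA -> (pi2 (0%nat, s1) > pi2 (0%nat, s2))%nat) /\
      (dlab d s1 = cB -> dlab d s2 = cB -> (pi2 (0%nat, s1) < pi2 (0%nat, s2))%nat).
Hypothesis Hc : (c < N 0%nat)%nat /\ dlab d c = cC /\ forall c', (c' < N 0%nat)%nat -> dlab d c' = cC -> c' = c.
Hypothesis Hbch : b = (2 * m - 1)%nat \/ b = (2 * m)%nat.

Definition jj s := pi1 (0%nat, s).
Definition piece s : nat :=
  if Nat.eqb (jj s) 0 then 0%nat else
  match dlab d s with cA => (2 * jj s - 1)%nat | cB => (2 * jj s)%nat | cC => b end.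

Lemma Hpi_inj : forall x y, L x -> L y -> pi x = pi y -> x = y.
Proof. destruct HD as [_ [_ [H _]]]. exact H. Qed.

Lemma Hpi_L : forall x, L x -> L (pi x).
Proof. destruct HD as [_ [H _]]. exact H. Qed.

Lemma HNpos : forall r, (r < n)%nat -> (0 < N r)%nat.
Proof. destruct HD as [H _]. exact H. Qed.

Lemma c_img : pi (0%nat, c) = (m, 0%nat).
Proof. apply Hb3; apply Hc. Qed.

Lemma c_pos : (0 < c)%nat.
Proof.
  destruct (Nat.eq_dec c 0) as [E|E]; [|lia]. exfalso. destruct Hc as [_ [H _]].
  rewrite E, Hb1 in H. destruct Hg; congruence.
Qed.

Lemma jj_c : jj c = m.
Proof. unfold jj. rewrite c_img. reflexivity. Qed.

Lemma L0 s : (s < N 0)%nat -> L (0%nat, s).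
Proof. intros. split; simpl; auto. lia. Qed.

Lemma img_low s : (s < N 0)%nat -> pi2 (0%nat, s) = 0%nat -> s = c.
Proof.
  intros Hs H2. destruct (pi (0%nat, s)) as [j s'] eqn:E. simpl in H2. subst s'.
  assert (Hj : (j <= m)%nat) by (pose proof (Hb4a s Hs); rewrite E in H; simpl in H; lia).
  assert (HL : L (j, 0%nat)) by (rewrite <- E; apply Hpi_L, L0; auto).
  destruct (Nat.eq_dec j m) as [->|Hjm].
  - assert (Heq : (0%nat, s) = (0%nat, c)).
    { apply Hpi_inj. apply L0; auto. apply L0; apply Hc. rewrite E, c_img. reflexivity. }
    inversion Heq; auto.
  - exfalso. set (r := (j + n - m)%nat).
    assert (Hr : (0 < r < n)%nat) by (unfold r; lia).
    assert (Hr0 : L (r, 0%nat)) by (split; simpl; [lia|apply HNpos; lia]).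
    destruct (Ha r Hr) as [Ha1 [_ Ha3]].
    assert (Hpr : pi (r, 0%nat) = (j, 0%nat)).
    { specialize (Ha1 0%nat (HNpos r (proj2 Hr))). destruct (pi (r, 0%nat)) as [x y] eqn:E2. simpl in *.
      subst. f_equal. unfold r. rewrite mod_big; lia. }
    assert (Heq : (r, 0%nat) = (0%nat, s)) by (apply Hpi_inj; auto; [apply L0; auto| rewrite Hpr, E; auto]).
    inversion Heq. lia.
Qed.

Lemma jj_le s : (s < N 0)%nat -> (jj s <= m)%nat.
Proof. intros. unfold jj. pose proof (Hb4a s H). lia. Qed.

Lemma piece_edge s : (s < N 0)%nat -> (piece s <= 2 * m)%nat /\ edge (piece s) = jj s.
Proof.
  intros Hs. pose proof (jj_le s Hs). unfold piece.
  destruct (Nat.eqb (jj s) 0) eqn:E.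
  - apply Nat.eqb_eq in E. rewrite E. split. lia. reflexivity.
  - apply Nat.eqb_neq in E. unfold edge.
    destruct (dlab d s) eqn:El.
    + split. lia. pose proof (half_spec (2 * jj s - 1 + 1)). lia.
    + split. lia. pose proof (half_spec (2 * jj s + 1)). lia.
    + assert (s = c) by (apply Hc; auto). subst s. rewrite jj_c in *.
      destruct Hbch as [->| ->]; split; try lia.
      pose proof (half_spec (2 * m - 1 + 1)). lia. pose proof (half_spec (2 * m + 1)). lia.
Qed.

Lemma lab_j0 s : (s < N 0)%nat -> jj s = 0%nat -> dlab d s = cB.
Proof.
  intros Hs Hj. assert (k = 0%nat). { pose proof (Hb4a s Hs). unfold jj in Hj. lia. }
  assert (H0 : dlab d 0%nat = cB) by (rewrite Hb1; auto).
  destruct s; auto. apply (Hb5 0%nat (S s)); auto; try lia. unfold jj in Hj. rewrite Hj, Hb2. auto.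
Qed.

Lemma piece_mono s1 s2 : (s1 < s2)%nat -> (s2 < N 0)%nat -> (piece s1 <= piece s2)%nat.
Proof.
  intros H12 Hs2. assert (Hs1 : (s1 < N 0)%nat) by lia.
  pose proof (Hb4b s1 s2 H12 Hs2) as Hj. fold (jj s1) (jj s2) in Hj.
  unfold piece.
  destruct (Nat.eqb (jj s1) 0) eqn:E1; [lia|]. apply Nat.eqb_neq in E1.
  destruct (Nat.eqb (jj s2) 0) eqn:E2; [apply Nat.eqb_eq in E2; lia|]. apply Nat.eqb_neq in E2.
  assert (Hc2 : dlab d s2 = cC -> jj s2 = m) by (intros; assert (s2 = c) by (apply Hc; auto); subst; apply jj_c).
  assert (Hc1 : dlab d s1 = cC -> jj s1 = m) by (intros; assert (s1 = c) by (apply Hc; auto); subst; apply jj_c).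
  pose proof (jj_le s2 Hs2).
  destruct (Nat.eq_dec (jj s1) (jj s2)) as [Eq|Ne].
  - destruct (dlab d s1) eqn:L1.
    + destruct (dlab d s2) eqn:L2; try lia; destruct Hbch; specialize (Hc2 eq_refl); lia.
    + rewrite (Hb5 s1 s2 H12 Hs2 Eq (or_introl L1)). lia.
    + rewrite (Hb5 s1 s2 H12 Hs2 Eq (or_intror L1)). specialize (Hc1 eq_refl). destruct Hbch; lia.
  - assert (jj s1 < jj s2)%nat by lia.
    destruct (dlab d s1) eqn:L1; destruct (dlab d s2) eqn:L2; try lia;
      try (specialize (Hc1 eq_refl)); try (specialize (Hc2 eq_refl)); destruct Hbch; lia.
Qed.

Lemma pi2_ne0 s : (s < N 0)%nat -> s <> c -> (0 < pi2 (0%nat, s))%nat.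
Proof.
  intros Hs Hne. destruct (Nat.eq_dec (pi2 (0%nat, s)) 0); [|lia]. exfalso. apply Hne. apply img_low; auto.
Qed.

Lemma orient s1 s2 : (s1 < s2)%nat -> (s2 < N 0)%nat -> piece s1 = piece s2 ->
  jj s1 = jj s2 /\
  (Nat.odd (piece s1) = true -> (pi2 (0%nat, s2) < pi2 (0%nat, s1))%nat) /\
  (Nat.odd (piece s1) = false -> (pi2 (0%nat, s1) < pi2 (0%nat, s2))%nat).
Proof.
  intros H12 Hs2 Ep. assert (Hs1 : (s1 < N 0)%nat) by lia.
  assert (Ej : jj s1 = jj s2).
  { destruct (piece_edge s1 Hs1) as [_ E1]. destruct (piece_edge s2 Hs2) as [_ E2]. congruence. }
  split; auto.
  assert (Hne : s1 <> c \/ s2 <> c) by lia.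
  unfold piece in *. rewrite <- Ej in Ep.
  destruct (Nat.eqb (jj s1) 0) eqn:E0.
  - apply Nat.eqb_eq in E0. split. intros H; discriminate.
    intros _. apply (proj2 (Hb6 s1 s2 H12 Hs2 Ej)). apply lab_j0; auto. apply lab_j0; auto. lia.
  - apply Nat.eqb_neq in E0.
    assert (HcS1 : dlab d s1 = cC -> s1 = c) by (intros; apply Hc; auto).
    assert (HcS2 : dlab d s2 = cC -> s2 = c) by (intros; apply Hc; auto).
    assert (Hodd1 : Nat.odd (2 * jj s1 - 1) = true).
    { apply Nat.odd_spec. exists (jj s1 - 1)%nat. lia. }
    assert (Hodd2 : Nat.odd (2 * jj s1) = false).
    { rewrite Nat.odd_mul. reflexivity. }
    destruct (dlab d s1) eqn:L1; destruct (dlab d s2) eqn:L2; try lia.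
    + rewrite Hodd1. split; [|discriminate]. intros _. apply (proj1 (Hb6 s1 s2 H12 Hs2 Ej)); auto.
    + specialize (HcS2 eq_refl). subst s2.
      destruct Hbch as [Hb|Hb]; rewrite <- Ep in Hb; [|lia].
      rewrite Hodd1. split; [|discriminate]. intros _. rewrite c_img. simpl. apply pi2_ne0; auto. lia.
    + rewrite Hodd2. split; [discriminate|]. intros _. apply (proj2 (Hb6 s1 s2 H12 Hs2 Ej)); auto.
    + exfalso. assert (dlab d s2 = cB) by (apply (Hb5 s1 s2); auto). congruence.
    + exfalso. assert (dlab d s2 = cB) by (apply (Hb5 s1 s2); auto). congruence.
    + specialize (HcS1 eq_refl). subst s1.
      rewrite Ep, Hodd2. split; [discriminate|]. intros _. rewrite c_img. simpl. apply pi2_ne0; auto. lia.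
    + specialize (HcS1 eq_refl). specialize (HcS2 eq_refl). lia.
Qed.

Definition Fb (z : nat * nat) (y : R) : R := if Nat.eqb (fst z) 0 then aff m (piece (snd z)) y else y.

Definition distI (y : R) : R := Rmax 0 (Rmax (- y) (y - 1)).

Lemma distI_cases y : (0 <= y <= 1 /\ distI y = 0) \/ (y < 0 /\ distI y = - y) \/ (1 < y /\ distI y = y - 1).
Proof.
  unfold distI. destruct (Rle_dec 0 y); destruct (Rle_dec y 1).
  - left. split. lra. rewrite Rmax_left. auto. apply Rmax_lub; lra.
  - right; right. split. lra. rewrite Rmax_right. rewrite Rmax_right; lra. rewrite Rmax_right; lra.
  - right; left. split. lra. rewrite Rmax_right. rewrite Rmax_left; lra. rewrite Rmax_left; lra.
  - lra.
Qed.

Lemma distI_ge0 y : 0 <= distI y.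
Proof. unfold distI. apply Rmax_l. Qed.

Lemma dist_step z y : L z ->
  distI y <= distI (Fb z y) /\ (fst z = 0%nat -> MM m * distI y <= distI (Fb z y)).
Proof.
  intros [Hz1 Hz2]. unfold Fb. destruct z as [r s]. simpl in *.
  destruct (Nat.eqb r 0) eqn:E.
  - apply Nat.eqb_eq in E. subst r.
    destruct (piece_edge s Hz2) as [Hp _].
    assert (HpM : INR (piece s) + 1 <= MM m) by (unfold MM; rewrite <- S_INR; apply le_INR; lia).
    assert (Hp0 : 0 <= INR (piece s)) by apply pos_INR.
    pose proof (MM_ge3 m Hm).
    assert (Hst : MM m * distI y <= distI (aff m (piece s) y)).
    { unfold aff. destruct (distI_cases y) as [[H1 H2]|[[H1 H2]|[H1 H2]]]; rewrite H2;
      [ pose proof (distI_ge0 (if Nat.odd (piece s) then INR (piece s) + 1 - MM m * y else MM m * y - INR (piece s))); lra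
      | | ];
      destruct (Nat.odd (piece s));
      match goal with |- _ <= distI ?e => destruct (distI_cases e) as [[A1 A2]|[[A1 A2]|[A1 A2]]]; rewrite A2 end; nra. }
    split; auto. pose proof (distI_ge0 y). nra.
  - split. lra. intros Hr. apply Nat.eqb_neq in E. lia.
Qed.

Section PosS.
Variable pos : nat * nat -> R.
Hypothesis Hpos : forall z, L z -> pos (pi z) = Fb z (pos z).
Hypothesis Hn1 : (1 <= n)%nat.

Lemma pos_iter i z : L z -> Nat.iter (S i) pi z = pi (Nat.iter i pi z).
Proof. intros. apply Nat.iter_succ. Qed.

Lemma dist0 z : L z -> distI (pos z) <= 0.
Proof.
  intros Hz. pose proof (MM_ge3 m Hm) as HM. destruct (Rle_dec (distI (pos z)) 0) as [|Hgt]; auto. exfalso.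
  destruct (per_ex n d HD Hn1) as [T [HT [HTz Hvis]]].
  assert (Hstep : forall u, L u -> 0 < distI (pos u) -> L (pi u) /\ distI (pos u) <= distI (pos (pi u)) /\
     (fst u = 0%nat -> MM m * distI (pos u) <= distI (pos (pi u)))).
  { intros u Hu _. split. apply Hpi_L; auto. rewrite Hpos by auto. apply dist_step; auto. }
  destruct (growth _ pi (fun u => distI (pos u)) L (fun u => fst u = 0%nat) (MM m) Hstep z Hz ltac:(lra) ltac:(lra) T) as [_ [_ G]].
  destruct (Hvis z Hz) as [kk [Hkk Ekk]].
  rewrite HTz in G by auto.
  assert (MM m * distI (pos z) <= distI (pos z)) by (apply G; exists kk; split; auto; rewrite Ekk; reflexivity).
  nra.
Qed.

Lemma pos01 z : L z -> 0 <= pos z <= 1.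
Proof.
  intros Hz. pose proof (dist0 z Hz). destruct (distI_cases (pos z)) as [[H1 _]|[[H1 H2]|[H1 H2]]]; auto; lra.
Qed.

Lemma pos_closed s : (s < N 0)%nat -> INR (piece s) <= MM m * pos (0%nat, s) <= INR (piece s) + 1.
Proof.
  intros Hs. pose proof (pos01 (pi (0%nat, s)) (Hpi_L _ (L0 s Hs))) as H.
  rewrite Hpos in H by (apply L0; auto). unfold Fb, aff in H. simpl in H.
  destruct (Nat.odd (piece s)); lra.
Qed.

Lemma prop_forall (Pr : nat * nat -> Prop) : (forall z, L z -> Pr z -> Pr (pi z)) ->
  forall z z', L z -> L z' -> Pr z -> Pr z'.
Proof.
  intros H z z' Hz Hz' Pz. destruct (cyc_reach n d HD z z' Hz Hz') as [j Hj]. subst z'.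
  clear Hz'. induction j. simpl; auto. rewrite Nat.iter_succ. apply H; auto. apply iter_L; auto.
Qed.

Lemma pos_ne0 z : L z -> pos z <> 0.
Proof.
  intros Hz E. pose proof (MM_ge3 m Hm) as HM3.
  assert (H : pos (0%nat, c) = 0).
  { apply (prop_forall (fun z => pos z = 0)) with (z := z); auto.
    - intros u Hu Pu. rewrite Hpos by auto. unfold Fb. destruct (Nat.eqb (fst u) 0) eqn:Eu; auto.
      apply Nat.eqb_eq in Eu. destruct u as [r s]. simpl in *. subst r.
      pose proof (pos_closed s (proj2 Hu)) as Hcl. rewrite Pu in Hcl.
      assert (Hp0 : piece s = 0%nat).
      { assert (Hle : INR (piece s) <= 0) by lra. destruct (piece s) as [|q]; auto.
        rewrite S_INR in Hle. pose proof (pos_INR q). lra. }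
      unfold aff. rewrite Hp0, Pu. simpl. lra.
    - apply L0, Hc. }
  pose proof (pos_closed c (proj1 Hc)) as Hcl. rewrite H in Hcl.
  unfold piece in Hcl. rewrite jj_c in Hcl. destruct (Nat.eqb m 0) eqn:Em; [apply Nat.eqb_eq in Em; lia|].
  rewrite (proj1 (proj2 Hc)) in Hcl. assert (Hb1' : (1 <= b)%nat) by (destruct Hbch; lia).
  apply le_INR in Hb1'. simpl in Hb1'. lra.
Qed.

Lemma pos_ne1 z : L z -> pos z <> 1.
Proof.
  intros Hz E. pose proof (MM_ge3 m Hm) as HM3.
  assert (H : pos (0%nat, 0%nat) = 1).
  { apply (prop_forall (fun z => pos z = 1)) with (z := z); auto.
    - intros u Hu Pu. rewrite Hpos by auto. unfold Fb. destruct (Nat.eqb (fst u) 0) eqn:Eu; auto.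
      apply Nat.eqb_eq in Eu. destruct u as [r s]. simpl in *. subst r.
      pose proof (pos_closed s (proj2 Hu)) as Hcl. rewrite Pu in Hcl.
      destruct (piece_edge s (proj2 Hu)) as [Hp _].
      assert (Hp2 : (piece s = 2 * m)%nat).
      { assert (Hle : MM m <= INR (piece s) + 1) by lra. unfold MM in Hle. rewrite <- S_INR in Hle. apply INR_le in Hle. lia. }
      unfold aff. rewrite Hp2, Pu. rewrite Nat.odd_mul. unfold MM. rewrite plus_INR. simpl. lra.
    - apply L0. apply HNpos. lia. }
  pose proof (pos_closed 0 (HNpos 0 ltac:(lia))) as Hcl. rewrite H in Hcl.
  assert (Hp0 : (piece 0 <= 2 * m - 2)%nat).
  { unfold piece. assert (Hj0 : jj 0 = k) by (unfold jj; auto). rewrite Hj0.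
    destruct (Nat.eqb k 0); [lia|]. rewrite Hb1. destruct Hg as [-> | ->]; lia. }
  apply le_INR in Hp0. rewrite minus_INR in Hp0 by lia. rewrite mult_INR in Hp0. unfold MM in Hcl.
  rewrite plus_INR, mult_INR in Hcl. simpl in *. lra.
Qed.

Lemma pos_open s : (s < N 0)%nat -> INR (piece s) < MM m * pos (0%nat, s) < INR (piece s) + 1.
Proof.
  intros Hs. pose proof (pos_closed s Hs) as [H1 H2].
  pose proof (pos_ne0 _ (Hpi_L _ (L0 s Hs))) as N0. pose proof (pos_ne1 _ (Hpi_L _ (L0 s Hs))) as N1.
  rewrite Hpos in N0, N1 by (apply L0; auto). unfold Fb, aff in N0, N1. simpl in N0, N1.
  assert (A1 : MM m * pos (0%nat, s) <> INR (piece s)).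
  { intros E. destruct (Nat.odd (piece s)); [apply N1|apply N0]; rewrite E; ring. }
  assert (A2 : MM m * pos (0%nat, s) <> INR (piece s) + 1).
  { intros E. destruct (Nat.odd (piece s)); [apply N0|apply N1]; rewrite E; ring. }
  split.
  - destruct (Rle_lt_or_eq_dec _ _ H1) as [Hl|He]; auto. symmetry in He. contradiction.
  - destruct (Rle_lt_or_eq_dec _ _ H2) as [Hl|He]; auto. contradiction.
Qed.

Definition pairstep (u : (nat * nat) * (nat * nat)) : (nat * nat) * (nat * nat) :=
  if Nat.ltb (pi2 (fst u)) (pi2 (snd u)) then (pi (fst u), pi (snd u)) else (pi (snd u), pi (fst u)).
Definition goodp (u : (nat * nat) * (nat * nat)) : Prop :=
  L (fst u) /\ L (snd u) /\ fst (fst u) = fst (snd u) /\ (snd (fst u) < snd (snd u))%nat.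
Definition Qp (u : (nat * nat) * (nat * nat)) : R := pos (fst u) - pos (snd u).

Lemma pair_step u : goodp u -> 0 < Qp u ->
  goodp (pairstep u) /\ Qp u <= Qp (pairstep u) /\ (fst (fst u) = 0%nat -> MM m * Qp u <= Qp (pairstep u)).
Proof.
  destruct u as [[r s] [r' s']]. unfold goodp, Qp, pairstep. simpl.
  intros [Hz [Hz' [Er Es]]] HQ. subst r'. pose proof (MM_ge3 m Hm) as HM3.
  destruct (Nat.eq_dec r 0) as [->|Hr].
  - pose proof (piece_mono s s' Es (proj2 Hz')) as Hpm.
    destruct (Nat.eq_dec (piece s) (piece s')) as [Ep|Np].
    +
      destruct (orient s s' Es (proj2 Hz') Ep) as [Ej [Hodd Hev]].
      set (p := piece s) in *.
      destruct (Nat.odd p) eqn:Ho.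
      * specialize (Hodd eq_refl). assert (Hlt : Nat.ltb (pi2 (0%nat, s)) (pi2 (0%nat, s')) = false) by (apply Nat.ltb_ge; lia).
        rewrite Hlt. simpl. rewrite !Hpos by auto. unfold Fb. simpl. rewrite <- Ep. fold p.
        split. split; [apply Hpi_L; auto|]. split; [apply Hpi_L; auto|]. split; auto.
        unfold jj in Ej. auto.
        pose proof (aff_diff m p (pos (0%nat, s')) (pos (0%nat, s))) as Hd. rewrite Ho in Hd.
        split; [|intros _]; nra.
      * specialize (Hev eq_refl). assert (Hlt : Nat.ltb (pi2 (0%nat, s)) (pi2 (0%nat, s')) = true) by (apply Nat.ltb_lt; lia).
        rewrite Hlt. simpl. rewrite !Hpos by auto. unfold Fb. simpl. rewrite <- Ep. fold p.
        split. split; [apply Hpi_L; auto|]. split; [apply Hpi_L; auto|]. split; auto.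
        unfold jj in Ej. auto.
        pose proof (aff_diff m p (pos (0%nat, s')) (pos (0%nat, s))) as Hd. rewrite Ho in Hd.
        split; [|intros _]; nra.
    + exfalso. pose proof (pos_closed s (proj2 Hz)) as [_ A]. pose proof (pos_closed s' (proj2 Hz')) as [B _].
      assert (Hle : (S (piece s) <= piece s')%nat) by lia. apply le_INR in Hle. rewrite S_INR in Hle.
      assert (MM m * pos (0%nat, s) <= MM m * pos (0%nat, s')) by lra.
      apply Rmult_le_reg_l in H. lra. lra.
  - assert (Hr2 : (0 < r < n)%nat) by (destruct Hz; simpl in *; lia).
    destruct (Ha r Hr2) as [Ha1 [Ha2 _]].
    assert (Hlt : Nat.ltb (pi2 (r, s)) (pi2 (r, s')) = true) by (apply Nat.ltb_lt; apply Ha2; auto; apply Hz').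
    rewrite Hlt. simpl. rewrite !Hpos by auto. unfold Fb. simpl.
    destruct (Nat.eqb r 0) eqn:E; [apply Nat.eqb_eq in E; lia|].
    split. split; [apply Hpi_L; auto|]. split; [apply Hpi_L; auto|]. split.
    rewrite (Ha1 s (proj2 Hz)), (Ha1 s' (proj2 Hz')). reflexivity. apply Ha2; auto. apply Hz'.
    split. lra. intros; lia.
Qed.

Lemma pair_iter i z z' : Nat.iter i pairstep (z, z') = (Nat.iter i pi z, Nat.iter i pi z') \/
                         Nat.iter i pairstep (z, z') = (Nat.iter i pi z', Nat.iter i pi z).
Proof.
  induction i. left; reflexivity.
  rewrite !Nat.iter_succ. destruct IHi as [E|E]; rewrite E; unfold pairstep; simpl;
  destruct (Nat.ltb _ _); auto.
Qed.

Lemma pos_mono r s s' : (r < n)%nat -> (s < s')%nat -> (s' < N r)%nat -> pos (r, s) <= pos (r, s').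
Proof.
  intros Hr Hs Hs'. pose proof (MM_ge3 m Hm) as HM3.
  set (u := ((r, s), (r, s'))).
  assert (Hz0 : L (r, s)) by (split; simpl; auto; lia).
  assert (Hz0' : L (r, s')) by (split; simpl; auto; lia).
  assert (Hu : goodp u) by (unfold goodp, u; simpl; auto).
  destruct (Rle_dec (Qp u) 0) as [Hq|Hq]; [unfold Qp, u in Hq; simpl in Hq; lra|]. exfalso.
  apply Rnot_le_lt in Hq.
  destruct (per_ex n d HD Hn1) as [T [HT [HTz Hvis]]].
  assert (Hz : L (r, s)) by (split; simpl; auto; lia).
  assert (Hz' : L (r, s')) by (split; simpl; auto; lia).
  pose proof (growth _ pairstep Qp goodp (fun u => fst (fst u) = 0%nat) (MM m) pair_step u Hu Hq ltac:(lra)) as G.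
  destruct (Hvis (r, s) Hz) as [kk [Hkk Ekk]].
  destruct (G T) as [GT1 [_ GT3]].
  assert (HE0 : fst (fst (Nat.iter kk pairstep u)) = 0%nat).
  { destruct (G kk) as [[_ [_ [Gk _]]] _].
    unfold u in *. destruct (pair_iter kk (r, s) (r, s')) as [E|E]; rewrite E in *; simpl in *; rewrite Ekk in *; simpl in *; auto. }
  assert (HM : MM m * Qp u <= Qp (Nat.iter T pairstep u)) by (apply GT3; exists kk; auto).
  unfold u in *. destruct (pair_iter T (r, s) (r, s')) as [E|E]; rewrite E in *; rewrite !HTz in * by auto.
  - unfold Qp in *. simpl in *. nra.
  - unfold goodp in GT1. simpl in GT1. lia.
Qed.

Lemma piece_eq_of_pos s s' : (s < N 0)%nat -> (s' < N 0)%nat -> pos (0%nat, s) = pos (0%nat, s') -> piece s = piece s'.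
Proof.
  intros Hs Hs' E. pose proof (pos_open s Hs) as [A1 A2]. pose proof (pos_open s' Hs') as [B1 B2].
  rewrite E in A1, A2.
  destruct (Nat.lt_trichotomy (piece s) (piece s')) as [H|[H|H]]; auto; exfalso;
  apply le_INR in H; rewrite S_INR in H; lra.
Qed.

Definition R2 (a a' : nat * nat) : Prop := L a /\ L a' /\ a <> a' /\ fst a = fst a' /\ pos a = pos a'.

Lemma R2_step a a' : R2 a a' -> R2 (pi a) (pi a') /\ (fst a = 0%nat -> piece (snd a) = piece (snd a')).
Proof.
  intros [Ha0 [Ha0' [Hne [Ef Ep]]]]. destruct a as [r s]; destruct a' as [r' s']. simpl in *. subst r'.
  assert (Hpn : pi (r, s) <> pi (r, s')) by (intros E; apply Hne; apply Hpi_inj; auto).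
  destruct (Nat.eq_dec r 0) as [->|Hr].
  - assert (Epc : piece s = piece s') by (apply piece_eq_of_pos; auto; [apply Ha0|apply Ha0']).
    split; auto. unfold R2. split. apply Hpi_L; auto. split. apply Hpi_L; auto. split; auto. split.
    + destruct (piece_edge s (proj2 Ha0)) as [_ E1]. destruct (piece_edge s' (proj2 Ha0')) as [_ E2].
      unfold jj in E1, E2. rewrite <- E1, <- E2, Epc. reflexivity.
    + rewrite !Hpos by auto. unfold Fb. simpl. rewrite Epc, Ep. reflexivity.
  - split; [|intros; lia]. assert (Hr2 : (0 < r < n)%nat) by (destruct Ha0; simpl in *; lia).
    destruct (Ha r Hr2) as [Ha1 _].
    unfold R2. split. apply Hpi_L; auto. split. apply Hpi_L; auto. split; auto. split.
    + rewrite (Ha1 s (proj2 Ha0)), (Ha1 s' (proj2 Ha0')). reflexivity.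
    + rewrite !Hpos by auto. unfold Fb. simpl. destruct (Nat.eqb r 0) eqn:E; [apply Nat.eqb_eq in E; lia|]. auto.
Qed.

Definition shiftP (dd : nat) : Prop :=
  Nat.iter dd pi (0%nat, c) <> (0%nat, c) /\
  forall j, fst (Nat.iter j pi (0%nat, c)) = fst (Nat.iter (j + dd) pi (0%nat, c)) /\
    (fst (Nat.iter j pi (0%nat, c)) = 0%nat ->
       piece (snd (Nat.iter j pi (0%nat, c))) = piece (snd (Nat.iter (j + dd) pi (0%nat, c)))).

Lemma collision_shift z z' : R2 z z' -> exists dd, shiftP dd.
Proof.
  intros HR. assert (Hall : forall j, R2 (Nat.iter j pi z) (Nat.iter j pi z')).
  { induction j. simpl; auto. rewrite !Nat.iter_succ. apply R2_step; auto. }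
  destruct HR as [Hz [Hz' _]].
  destruct (cyc_reach n d HD z (0%nat, c) Hz (L0 c (proj1 Hc))) as [i Hi].
  set (w1 := Nat.iter i pi z').
  assert (Hw1 : R2 (0%nat, c) w1) by (rewrite <- Hi; apply Hall).
  destruct (cyc_reach n d HD (0%nat, c) w1 (L0 c (proj1 Hc))) as [dd Hdd]. apply Hw1.
  exists dd. split.
  - rewrite Hdd. intros E. destruct Hw1 as [_ [_ [H _]]]. auto.
  - intros j.
    assert (Hj : R2 (Nat.iter j pi (0%nat, c)) (Nat.iter j pi w1)).
    { unfold w1. rewrite <- Hi. rewrite <- !Nat.iter_add. apply Hall. }
    rewrite <- Hdd in Hj. rewrite <- Nat.iter_add in Hj.
    split. apply Hj. intros H0. apply (proj2 (R2_step _ _ Hj) H0).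
Qed.

Hypothesis Hnc : forall z z', ~ R2 z z'.

Definition Xp (r s : nat) : R := pos (r, s).
Definition Pp (y : pt) : Prop := exists r s, (r < n)%nat /\ (s < N r)%nat /\ y = Ed r (Xp r s).

Lemma Hn2 : (2 <= n)%nat.
Proof. lia. Qed.

Lemma HX01p : forall r s, (r < n)%nat -> (s < N r)%nat -> 0 <= Xp r s < 1.
Proof.
  intros r s Hr Hs. assert (Hz : L (r, s)) by (split; auto). unfold Xp.
  pose proof (pos01 _ Hz). pose proof (pos_ne1 _ Hz). destruct H as [H1 H2]. split; auto.
  destruct (Rle_lt_or_eq_dec _ _ H2); auto. contradiction.
Qed.

Lemma HXincp : forall r s s', (r < n)%nat -> (s < s')%nat -> (s' < N r)%nat -> Xp r s < Xp r s'.
Proof.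
  intros r s s' Hr Hs Hs'. unfold Xp. pose proof (pos_mono r s s' Hr Hs Hs').
  destruct (Rle_lt_or_eq_dec _ _ H); auto. exfalso. apply (Hnc (r, s) (r, s')).
  unfold R2. split. split; simpl; auto; lia. split. split; simpl; auto. split. intros E; inversion E; lia. auto.
Qed.

Lemma HPp : forall y, Pp y <-> exists r s, (r < n)%nat /\ (s < N r)%nat /\ y = Ed r (Xp r s).
Proof. intros; reflexivity. Qed.

Lemma fmap_lbl z : L z -> fmap n m (Ed (fst z) (Xp (fst z) (snd z))) = Ed (fst (pi z)) (Xp (fst (pi z)) (snd (pi z))).
Proof.
  intros Hz. destruct z as [r s]. cbn [fst snd]. unfold Xp. rewrite <- surjective_pairing.
  destruct (Nat.eq_dec r 0) as [->|Hr].
  - destruct (piece_edge s (proj2 Hz)) as [Hp Hj].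
    rewrite Hpos by auto. unfold Fb. cbn [fst snd Nat.eqb].
    rewrite (fmap_e0 n m (piece s) (pos (0%nat, s)) Hp (pos_open s (proj2 Hz))).
    unfold jj in Hj. rewrite Hj. reflexivity.
  - rewrite fmap_er by (try lia; apply pos_ne1; auto).
    assert (Hr2 : (0 < r < n)%nat) by (destruct Hz; simpl in *; lia).
    destruct (Ha r Hr2) as [Ha1 _]. rewrite (Ha1 s (proj2 Hz)).
    rewrite Hpos by auto. unfold Fb. simpl. destruct (Nat.eqb r 0) eqn:E; [apply Nat.eqb_eq in E; lia|]. reflexivity.
Qed.

Definition lblz (z : nat * nat) : pt := Ed (fst z) (Xp (fst z) (snd z)).

Lemma iter_lbl j z : L z -> Nat.iter j (fmap n m) (lblz z) = lblz (Nat.iter j pi z).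
Proof.
  intros Hz. induction j. reflexivity. rewrite !Nat.iter_succ, IHj. unfold lblz. apply fmap_lbl. apply iter_L; auto.
Qed.

Lemma Pp_lbl z : L z -> Pp (lblz z).
Proof. intros Hz. exists (fst z), (snd z). destruct Hz. auto. Qed.

Lemma Pp_inv y : Pp y -> exists z, L z /\ y = lblz z.
Proof. intros [r [s' [Hr [Hs ->]]]]. exists (r, s'). split. split; auto. reflexivity. Qed.

Lemma periodic_Pp : periodic_orbit n m Pp.
Proof.
  destruct (per_ex n d HD Hn1) as [T [HT [HTz _]]].
  exists (lblz z0), T. split. unfold lblz, z0. simpl. split. lia. apply HX01p. lia. apply HNpos. lia.
  split; auto. split. rewrite iter_lbl by apply (z0_L n d HD Hn1). rewrite HTz by apply (z0_L n d HD Hn1). reflexivity.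
  intros y. split.
  - intros Hy. apply Pp_inv in Hy. destruct Hy as [z [Hz ->]].
    destruct (cyc_reach n d HD z0 z (z0_L n d HD Hn1) Hz) as [j Hj]. exists j. rewrite iter_lbl by apply (z0_L n d HD Hn1). rewrite Hj. auto.
  - intros [j ->]. rewrite iter_lbl by apply (z0_L n d HD Hn1). apply Pp_lbl. apply (iter_L n d HD). apply (z0_L n d HD Hn1).
Qed.

Lemma first_char r q : (r < n)%nat -> (is_first Pp r q <-> q = lblz (r, 0%nat)).
Proof.
  intros Hr. split.
  - intros [HPq [Hon Hmin]]. apply Pp_inv in HPq. destruct HPq as [[r' s'] [Hz ->]].
    unfold lblz in *. simpl in *. destruct Hon as [E|[t E]]; [discriminate|]. inversion E. subst r'.
    destruct s' as [|s']; auto. exfalso.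
    assert (H0 : Pp (lblz (r, 0%nat))) by (apply Pp_lbl; split; simpl; auto; apply HNpos; auto).
    specialize (Hmin _ H0). unfold lblz in Hmin. simpl in Hmin.
    assert (Xp r 0 < Xp r (S s')) by (apply HXincp; auto; [lia|apply Hz]).
    assert (Hle : Xp r (S s') <= Xp r 0) by (apply Hmin; right; exists (Xp r 0); reflexivity). lra.
  - intros ->. split. apply Pp_lbl. split; simpl; auto. apply HNpos; auto. split. right. eexists. reflexivity.
    intros q Hq Hon. apply Pp_inv in Hq. destruct Hq as [[r' s'] [Hz ->]]. unfold lblz in *. simpl in *.
    destruct Hon as [E|[t E]]; [discriminate|]. inversion E. subst r'.
    destruct s'. lra. left. apply HXincp; auto. lia. apply Hz.
Qed.

Lemma star_Pp : star_orbit n m Pp.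
Proof.
  assert (Hz0 := z0_L n d HD Hn1).
  split; [apply periodic_Pp|]. split; [|split; [|split]].
  - intros H. assert (E : lblz z0 = Vc) by (apply H; apply Pp_lbl; auto). discriminate.
  - intros r Hr. exists (lblz (r, 0%nat)). split. apply Pp_lbl. split; simpl; auto; apply HNpos; auto.
    right. eexists. reflexivity.
  - exists (lblz z0). split. apply Pp_lbl; auto. split. right. eexists. reflexivity.
    change (lblz z0) with (Ed (fst (0%nat,0%nat)) (Xp (fst (0%nat,0%nat)) (snd (0%nat,0%nat)))). rewrite (fmap_lbl (0%nat, 0%nat) Hz0). rewrite Hb2.
    intros [E|[t E]]; [discriminate|]. inversion E. lia.
  - intros r q Hr Hq. apply first_char in Hq; [|lia]. subst q.
    assert (HL : L (r, 0%nat)) by (split; simpl; [lia|apply HNpos; lia]).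
    apply first_char. apply Nat.mod_upper_bound. lia.
    change (lblz (r, 0%nat)) with (Ed (fst (r,0%nat)) (Xp (fst (r,0%nat)) (snd (r,0%nat)))). rewrite (fmap_lbl (r, 0%nat) HL). unfold lblz.
    destruct (Ha r Hr) as [Ha1 [_ Ha3]]. rewrite (Ha1 0%nat (proj2 HL)), Ha3. reflexivity.
Qed.

Lemma piece_parity s : (s < N 0)%nat -> s <> c ->
  (dlab d s = cA /\ Nat.odd (piece s) = true) \/ (dlab d s = cB /\ Nat.odd (piece s) = false).
Proof.
  intros Hs Hne. unfold piece.
  destruct (Nat.eqb (jj s) 0) eqn:E.
  - apply Nat.eqb_eq in E. right. split. apply lab_j0; auto. reflexivity.
  - apply Nat.eqb_neq in E. destruct (dlab d s) eqn:Ls.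
    + left. split; auto. apply Nat.odd_spec. exists (jj s - 1)%nat. lia.
    + right. split; auto. rewrite Nat.odd_mul. reflexivity.
    + exfalso. apply Hne. apply Hc; auto.
Qed.

Lemma beh_all s : (s < N 0)%nat ->
  (dlab d s = cA <-> loc_rev n m Pp (Ed 0 (Xp 0 s))) /\
  (dlab d s = cB <-> loc_pres n m Pp (Ed 0 (Xp 0 s))) /\
  (dlab d s = cC <-> loc_noninj n m Pp (Ed 0 (Xp 0 s))).
Proof.
  intros Hs. destruct (piece_edge s Hs) as [Hp Hj].
  pose proof (pos_open s Hs) as Hpc.
  assert (Hjn : (edge (piece s) < n)%nat) by (rewrite Hj; pose proof (jj_le s Hs); lia).
  assert (Himg : aff m (piece s) (Xp 0 s) = Xp (edge (piece s)) (pi2 (0%nat, s))).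
  { unfold Xp. rewrite Hj. unfold jj. rewrite <- surjective_pairing. rewrite Hpos by (apply L0; auto).
    unfold Fb. reflexivity. }
  destruct (Nat.eq_dec s c) as [->|Hne].
  - rewrite c_img in Himg. simpl in Himg.
    destruct (beh_fold n m N Xp Pp Hn2 HNpos HX01p HXincp HPp c (piece c) Hs Hp Hpc Hjn)
      as [H1 [H2 H3]].
    + rewrite Himg. rewrite Hj, jj_c. reflexivity.
    + right. apply c_pos.
    + rewrite (proj1 (proj2 Hc)). split; [|split]; split; intros; auto; try discriminate; contradiction.
  - assert (Hlt : Xp (edge (piece s)) 0 < aff m (piece s) (Xp 0 s)).
    { rewrite Himg. apply HXincp; auto. apply pi2_ne0; auto.
      assert (HL : L (pi (0%nat, s))) by (apply Hpi_L, L0; auto). destruct HL as [_ HL].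
      rewrite Hj. unfold jj. exact HL. }
    destruct (beh_inj n m N Xp Pp Hn2 HNpos HX01p HXincp HPp s (piece s) Hs Hp Hpc Hjn Hlt) as [H1 [H2 H3]].
    assert (HnC : dlab d s <> cC) by (intros E; apply Hne; apply Hc; auto).
    destruct (piece_parity s Hs Hne) as [[La Po]|[La Po]]; rewrite La.
    + split; [|split]; split; intros; auto; try discriminate.
      * apply H2; auto.
      * apply H1 in H. congruence.
      * contradiction.
    + split; [|split]; split; intros; auto; try discriminate.
      * apply H2 in H. congruence.
      * apply H1; auto.
      * contradiction.
Qed.

Lemma realize : exists P, in_calP n m k g P /\ data_of n m P d.
Proof.
  assert (Hz0 := z0_L n d HD Hn1).
  assert (HD5 : forall s, (s < N 0)%nat -> forall g', dlab d s = g' <-> behaves n m Pp g' (Ed 0 (Xp 0 s))).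
  { intros s Hs g'. destruct (beh_all s Hs) as [A1 [A2 A3]]. destruct g'; simpl; auto. }
  exists Pp. split.
  - split. apply star_Pp. intros p Hp. apply first_char in Hp; [|lia]. subst p.
    change (lblz (0%nat, 0%nat)) with (Ed (fst (0%nat,0%nat)) (Xp (fst (0%nat,0%nat)) (snd (0%nat,0%nat)))).
    split.
    + rewrite (fmap_lbl (0%nat, 0%nat) Hz0). rewrite Hb2. right. eexists. reflexivity.
    + apply HD5. apply HNpos. lia. auto.
  - exists (fun r s => Ed r (Xp r s)). split; [|split; [|split; [|split]]].
    + intros r s Hr Hs. split. exists r, s. auto. eexists. reflexivity.
    + intros r s s' Hr Hss Hs'. simpl. apply HXincp; auto.
    + intros r y Hr Hy Hon. destruct Hy as [r' [s' [Hr' [Hs' ->]]]].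
      destruct Hon as [E|[t E]]; [discriminate|]. inversion E. subst r'. exists s'. auto.
    + intros r s Hr Hs. apply (fmap_lbl (r, s)). split; auto.
    + intros s Hs g'. apply HD5. auto.
Qed.

End PosS.

Fixpoint Yseq (x : R) (i : nat) : R :=
  match i with O => x | S i' => Fb (Nat.iter i' pi (0%nat, 0%nat)) (Yseq x i') end.

Lemma Y_affine i : exists A B, (forall x, Yseq x i = A * x + B) /\ 1 <= Rabs A /\ ((0 < i)%nat -> MM m <= Rabs A).
Proof.
  pose proof (MM_ge3 m Hm) as HM3.
  induction i as [|i [A [B [HY [H1 H2]]]]].
  - exists 1, 0. split. intros; simpl; ring. rewrite Rabs_R1. split. lra. intros; lia.
  - simpl. unfold Fb. destruct (Nat.eqb (fst (Nat.iter i pi (0%nat, 0%nat))) 0) eqn:E.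
    + unfold aff. set (p := piece (snd (Nat.iter i pi (0%nat, 0%nat)))). destruct (Nat.odd p).
      * exists (- (MM m * A)), (INR p + 1 - MM m * B). split. intros x. rewrite HY. ring.
        rewrite Rabs_Ropp, Rabs_mult, (Rabs_right (MM m)) by lra. split; nra.
      * exists (MM m * A), (MM m * B - INR p). split. intros x. rewrite HY. ring.
        rewrite Rabs_mult, (Rabs_right (MM m)) by lra. split; nra.
    + exists A, B. split; auto. split; auto. intros _. destruct i. simpl in E. discriminate. apply H2. lia.
Qed.

Lemma pos_exists : (1 <= n)%nat -> exists pos : nat * nat -> R, forall z, L z -> pos (pi z) = Fb z (pos z).
Proof.
  intros Hn1. pose proof (MM_ge3 m Hm) as HM3.
  destruct (period_ex n d HD Hn1) as [T [HT [HTz [Huniq Hall]]]].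
  destruct (Y_affine T) as [A [B [HY [H1 H2]]]].
  specialize (H2 HT).
  assert (HA : 1 - A <> 0).
  { intros E. assert (A = 1) by lra. subst. rewrite Rabs_R1 in H2. lra. }
  set (x0 := B / (1 - A)).
  assert (Hfix : Yseq x0 T = x0) by (rewrite HY; unfold x0; field; auto).
  set (idx := fun z => epsilon (inhabits 0%nat) (fun i => (i < T)%nat /\ Nat.iter i pi z0 = z)).
  assert (Hidx : forall z, L z -> (idx z < T)%nat /\ Nat.iter (idx z) pi z0 = z).
  { intros z Hz. unfold idx. apply epsilon_spec. destruct (Hall z Hz) as [i [Hi Ei]]. exists i. auto. }
  exists (fun z => Yseq x0 (idx z)).
  intros z Hz. destruct (Hidx z Hz) as [Hi Ei]. destruct (Hidx (pi z) (Hpi_L z Hz)) as [Hi' Ei'].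
  destruct (Nat.eq_dec (S (idx z)) T) as [ET|ET].
  - assert (Hz0 : idx (pi z) = 0%nat).
    { apply Huniq; auto. rewrite Ei'. simpl. rewrite <- Ei. rewrite <- Nat.iter_succ, ET. auto. }
    rewrite Hz0. simpl. rewrite <- Hfix at 1. rewrite <- ET. simpl. unfold z0 in Ei. rewrite Ei. reflexivity.
  - assert (Hz1 : idx (pi z) = S (idx z)).
    { apply Huniq; auto. lia. rewrite Ei'. rewrite Nat.iter_succ, Ei. auto. }
    rewrite Hz1. simpl. unfold z0 in Ei. rewrite Ei. reflexivity.
Qed.

End Rev.

End MD.
Import MD.

Module ME.

Lemma two_choice (n : nat) (d : data) (c b1 b2 d1 d2 : nat) : in_Dn n d -> (1 <= n)%nat -> b1 <> b2 ->
  ((c < dN d 0)%nat /\ dlab d c = cC /\ (forall c', (c' < dN d 0)%nat -> dlab d c' = cC -> c' = c)) ->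
  jj d c <> 0%nat -> shiftP d b1 c d1 -> shiftP d b2 c d2 -> False.
Proof.
  intros HD Hn Hb Hc Hjc [N1 S1] [N2 S2].
  assert (HL : forall j, inL n d (Nat.iter j (dpi d) (0%nat, c))).
  { intros j. apply (iter_L n d HD). split; simpl. lia. apply Hc. }
  assert (Hpc : forall b, piece d b c = b).
  { intros b. unfold piece. destruct (Nat.eqb (jj d c) 0) eqn:Ej; [apply Nat.eqb_eq in Ej; lia|].
    rewrite (proj1 (proj2 Hc)). reflexivity. }
  assert (Hind : forall j, fst (Nat.iter j (dpi d) (0%nat, c)) = 0%nat -> Nat.iter j (dpi d) (0%nat, c) <> (0%nat, c) ->
     piece d b1 (snd (Nat.iter j (dpi d) (0%nat, c))) = piece d b2 (snd (Nat.iter j (dpi d) (0%nat, c)))).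
  { intros j H0 Hne. pose proof (HL j) as HLj. destruct (Nat.iter j (dpi d) (0%nat, c)) as [r s]. simpl in *. subst r.
    destruct HLj as [_ Hs]. simpl in Hs. unfold piece.
    destruct (dlab d s) eqn:Ll; try reflexivity.
    exfalso. apply Hne. f_equal. apply Hc; auto. }
  destruct (S1 0%nat) as [A1 A2]. simpl in A1, A2.
  assert (B1 : piece d b1 (snd (Nat.iter d1 (dpi d) (0%nat, c))) = b1) by (rewrite <- A2; auto).
  assert (C1 : piece d b2 (snd (Nat.iter d1 (dpi d) (0%nat, c))) = b1) by (rewrite <- Hind; auto).
  destruct (S2 d1) as [D1 D2].
  specialize (D2 (eq_sym A1)). rewrite C1 in D2.
  destruct (S2 0%nat) as [F1 F2]. simpl in F1, F2.
  destruct (classic (Nat.iter (d1 + d2) (dpi d) (0%nat, c) = (0%nat, c))) as [Ec|Ec].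
  - rewrite Ec in D2. simpl in D2. rewrite Hpc in D2. auto.
  - assert (G1 : piece d b1 (snd (Nat.iter (d1 + d2) (dpi d) (0%nat, c))) = b1).
    { rewrite Hind; auto. rewrite <- D1. auto. }
    destruct (S1 d2) as [H1 H2]. specialize (H2 (eq_sym F1)). rewrite Nat.add_comm in H2. rewrite G1 in H2.
    assert (I1 : piece d b2 (snd (Nat.iter d2 (dpi d) (0%nat, c))) = b1) by (rewrite <- Hind; auto).
    specialize (F2 eq_refl). rewrite I1, Hpc in F2. auto.
Qed.

Lemma rev_dir (n m k : nat) (g : cls) (d : data) :
  (0 < m)%nat -> (2 * m <= n)%nat -> (k < m)%nat -> (g = cA \/ g = cB) -> (k = 0%nat -> g = cB) ->
  in_Dn n d -> cond_ab n m k g d -> exists P, in_calP n m k g P /\ data_of n m P d.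
Proof.
  intros Hm Hmn Hk Hg Hk0 HD Hab.
  unfold cond_ab in Hab. cbv zeta in Hab.
  destruct Hab as [Ha [Hb1 [Hb2 [Hb3 [Hb4a [Hb4b [Hb5 Hb6]]]]]]].
  assert (Hn1 : (1 <= n)%nat) by lia.
  pose proof HD as HD'. destruct HD' as [_ [_ [_ [_ [c Hc]]]]].
  assert (Hjc : jj d c <> 0%nat).
  { unfold jj. rewrite (Hb3 c (proj1 Hc) (proj1 (proj2 Hc))). simpl. lia. }
  assert (Hch1 : (2 * m - 1 = 2 * m - 1 \/ 2 * m - 1 = 2 * m)%nat) by auto.
  assert (Hch2 : (2 * m = 2 * m - 1 \/ 2 * m = 2 * m)%nat) by auto.
  destruct (pos_exists n m k g d (2 * m - 1) c Hm Hmn Hk Hg Hk0 HD Hb1 Hb2 Hb4a Hc Hch1 Hn1) as [pos1 Hpos1].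
  destruct (pos_exists n m k g d (2 * m) c Hm Hmn Hk Hg Hk0 HD Hb1 Hb2 Hb4a Hc Hch2 Hn1) as [pos2 Hpos2].
  destruct (classic (forall z z', ~ R2 n d pos1 z z')) as [Nc1|C1].
  - exact (realize n m k g d (2 * m - 1) c Hm Hmn Hk Hg Hk0 HD Ha Hb1 Hb2 Hb3 Hb4a Hb4b Hb5 Hb6 Hc Hch1 pos1 Hpos1 Hn1 Nc1).
  - destruct (classic (forall z z', ~ R2 n d pos2 z z')) as [Nc2|C2].
    + exact (realize n m k g d (2 * m) c Hm Hmn Hk Hg Hk0 HD Ha Hb1 Hb2 Hb3 Hb4a Hb4b Hb5 Hb6 Hc Hch2 pos2 Hpos2 Hn1 Nc2).
    + exfalso.
      apply not_all_ex_not in C1. destruct C1 as [z C1]. apply not_all_ex_not in C1. destruct C1 as [z' C1]. apply NNPP in C1.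
      apply not_all_ex_not in C2. destruct C2 as [w C2]. apply not_all_ex_not in C2. destruct C2 as [w' C2]. apply NNPP in C2.
      destruct (collision_shift n m k g d (2 * m - 1) c Hm Hmn Hk Hg Hk0 HD Ha Hb1 Hb2 Hb3 Hb4a Hc Hch1 pos1 Hpos1 Hn1 z z' C1) as [d1 S1].
      destruct (collision_shift n m k g d (2 * m) c Hm Hmn Hk Hg Hk0 HD Ha Hb1 Hb2 Hb3 Hb4a Hc Hch2 pos2 Hpos2 Hn1 w w' C2) as [d2 S2].
      apply (two_choice n d c (2 * m - 1) (2 * m) d1 d2 HD Hn1 ltac:(lia) Hc Hjc S1 S2).
Qed.

End ME.
Import ME.

Module MF.
Open Scope R_scope.

Lemma floorN_le2m m t : 0 <= t < 1 -> (floorN (MM m * t) <= 2 * m)%nat.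
Proof.
  intros Ht. assert (HM : 0 < MM m) by (unfold MM; apply lt_0_INR; lia).
  assert (H0 : 0 <= MM m * t) by nra.
  pose proof (floorN_spec _ H0) as [H1 H2].
  assert (MM m * t < MM m) by nra. unfold MM in *.
  assert (INR (floorN (INR (2 * m + 1) * t)) < INR (2 * m + 1)) by lra.
  apply INR_lt in H3. lia.
Qed.

Lemma floorN_mono x y : 0 <= x -> x <= y -> (floorN x <= floorN y)%nat.
Proof.
  intros Hx Hxy. pose proof (floorN_spec x Hx). pose proof (floorN_spec y ltac:(lra)).
  destruct (Nat.le_gt_cases (floorN x) (floorN y)); auto. exfalso.
  assert (H2 : INR (S (floorN y)) <= INR (floorN x)) by (apply le_INR; lia). rewrite S_INR in H2. lra.
Qed.

Lemma fmap_valid n m x : (m < n)%nat -> valid n x -> valid n (fmap n m x).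
Proof.
  intros Hmn Hx. destruct x as [|r t]; [simpl; auto|]. destruct Hx as [Hr Ht].
  destruct r as [|r'].
  - set (p := floorN (MM m * t)).
    assert (Hp : (p <= 2 * m)%nat) by (apply floorN_le2m; auto).
    assert (HM : 0 < MM m) by (unfold MM; apply lt_0_INR; lia).
    pose proof (floorN_spec (MM m * t) ltac:(nra)) as [F1 F2]. fold p in F1, F2.
    destruct (Rle_lt_or_eq_dec _ _ F1) as [Hlt|Heq].
    + rewrite (fmap_e0 n m p t Hp (conj Hlt F2)). unfold valid. split.
      unfold edge. pose proof (half_spec (p + 1)). lia.
      pose proof (aff_range m p t (conj Hlt F2)). lra.
    + rewrite (fmap_e0_bd n m p t Heq Hp).
      destruct (Nat.eqb p 0). simpl. split; [lia|lra].
      destruct (Nat.odd p). simpl; auto. unfold valid. split; [|lra]. pose proof (half_spec p). lia.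
  - simpl. unfold mkpt. destruct (Req_EM_T t 1). simpl; auto. simpl. split; auto. apply Nat.mod_upper_bound. lia.
Qed.

Section Fwd.
Variables (n m k : nat) (g : cls) (d : data) (P : pt -> Prop) (lbl : nat -> nat -> pt).
Local Notation N := (dN d).
Local Notation pi := (dpi d).
Local Notation L := (inL n d).
Local Notation pi1 z := (fst (dpi d z)).
Local Notation pi2 z := (snd (dpi d z)).
Hypothesis Hm : (0 < m)%nat.
Hypothesis Hmn : (2 * m <= n)%nat.
Hypothesis Hk : (k < m)%nat.
Hypothesis Hg : g = cA \/ g = cB.
Hypothesis HD : in_Dn n d.
Hypothesis HcalP : in_calP n m k g P.
Hypothesis L1 : forall r s, (r < n)%nat -> (s < N r)%nat -> P (lbl r s) /\ exists t, lbl r s = Ed r t.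
Hypothesis L2 : forall r s s', (r < n)%nat -> (s < s')%nat -> (s' < N r)%nat -> Defs.pos (lbl r s) < Defs.pos (lbl r s').
Hypothesis L3 : forall r y, (r < n)%nat -> P y -> on_edge r y -> exists s, (s < N r)%nat /\ y = lbl r s.
Hypothesis L4 : forall r s, (r < n)%nat -> (s < N r)%nat -> fmap n m (lbl r s) = lbl (fst (pi (r, s))) (snd (pi (r, s))).
Hypothesis L5 : forall s, (s < N 0)%nat -> forall g', dlab d s = g' <-> behaves n m P g' (lbl 0%nat s).

Definition X r s := Defs.pos (lbl r s).

Lemma lbl_eq r s : (r < n)%nat -> (s < N r)%nat -> lbl r s = Ed r (X r s).
Proof. intros. destruct (L1 r s H H0) as [_ [t Ht]]. unfold X. rewrite Ht. reflexivity. Qed.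

Lemma HNpos' : forall r, (r < n)%nat -> (0 < N r)%nat.
Proof. destruct HD as [H _]. exact H. Qed.

Lemma Pvalid y : P y -> valid n y.
Proof.
  destruct HcalP as [[[x [per [Hx [Hper [Hit HPx]]]]] _] _].
  intros Hy. apply HPx in Hy. destruct Hy as [j ->]. induction j. simpl; auto.
  rewrite Nat.iter_succ. apply fmap_valid; auto. lia.
Qed.

Lemma noVc : ~ P Vc.
Proof.
  destruct HcalP as [[[x [per [Hx [Hper [Hit HPx]]]]] [Hnot _]] _].
  intros HV. apply Hnot. intros y.
  assert (Hmul : forall q, Nat.iter (q * per) (fmap n m) x = x).
  { induction q; simpl; auto. rewrite Nat.iter_add, IHq. auto. }
  assert (HVc : forall j, Nat.iter j (fmap n m) Vc = Vc) by (induction j; simpl; auto; rewrite IHj; reflexivity).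
  apply HPx in HV. destruct HV as [i Hi].
  assert (Hx0 : x = Vc).
  { rewrite <- (Hmul (S i)). replace (S i * per)%nat with ((S i * per - i) + i)%nat by nia.
    rewrite Nat.iter_add, <- Hi. apply HVc. }
  split.
  - intros Hy. apply HPx in Hy. destruct Hy as [j ->]. rewrite Hx0. apply HVc.
  - intros ->. apply HPx. exists 0%nat. simpl. auto.
Qed.

Lemma HX01f r s : (r < n)%nat -> (s < N r)%nat -> 0 <= X r s < 1.
Proof.
  intros Hr Hs. pose proof (Pvalid _ (proj1 (L1 r s Hr Hs))) as Hv. rewrite lbl_eq in Hv by auto.
  apply Hv.
Qed.

Lemma HXincf r s s' : (r < n)%nat -> (s < s')%nat -> (s' < N r)%nat -> X r s < X r s'.
Proof. apply L2. Qed.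

Lemma HPf y : P y <-> exists r s, (r < n)%nat /\ (s < N r)%nat /\ y = Ed r (X r s).
Proof.
  split.
  - intros Hy. pose proof (Pvalid y Hy) as Hv. destruct y as [|r t].
    + exfalso. apply noVc; auto.
    + destruct Hv as [Hr _]. destruct (L3 r (Ed r t) Hr Hy) as [s [Hs E]].
      right. eexists. reflexivity. exists r, s. split; auto. split; auto. rewrite E. apply lbl_eq; auto.
  - intros [r [s [Hr [Hs ->]]]]. rewrite <- lbl_eq by auto. apply L1; auto.
Qed.

Lemma Hn2 : (2 <= n)%nat.
Proof. lia. Qed.

Lemma piL z : L z -> L (pi z).
Proof. destruct HD as [_ [H _]]. apply H. Qed.

Lemma pi_inj x y : L x -> L y -> pi x = pi y -> x = y.
Proof. destruct HD as [_ [_ [H _]]]. apply H. Qed.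

Lemma fmapX r s : (r < n)%nat -> (s < N r)%nat -> fmap n m (Ed r (X r s)) = Ed (pi1 (r, s)) (X (pi1 (r, s)) (pi2 (r, s))).
Proof.
  intros Hr Hs. rewrite <- lbl_eq by auto. rewrite L4 by auto.
  destruct (piL (r, s)) as [H1 H2]. split; auto. apply lbl_eq; auto.
Qed.

Lemma fwd_a r : (0 < r < n)%nat ->
  (forall s, (s < N r)%nat -> pi1 (r, s) = ((r + m) mod n)%nat /\ X (pi1 (r, s)) (pi2 (r, s)) = X r s).
Proof.
  intros Hr s Hs. pose proof (fmapX r s ltac:(lia) Hs) as E.
  rewrite fmap_er in E by (try lia; pose proof (HX01f r s ltac:(lia) Hs); lra).
  inversion E. auto.
Qed.

Lemma is_first_lbl r q : (r < n)%nat -> (is_first P r q <-> q = Ed r (X r 0)).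
Proof. apply (first_char_cfg n N X P Hn2 HNpos' HXincf HPf). Qed.

Lemma fwd_a2 r : (0 < r < n)%nat -> pi2 (r, 0%nat) = 0%nat.
Proof.
  intros Hr. destruct HcalP as [[_ [_ [_ [_ H5]]]] _].
  assert (HL : L (r, 0%nat)) by (split; simpl; [lia|apply HNpos'; lia]).
  assert (Hf : is_first P r (Ed r (X r 0))) by (apply is_first_lbl; try lia; reflexivity).
  specialize (H5 r _ Hr Hf). rewrite (fmapX r 0 ltac:(lia) (proj2 HL)) in H5.
  destruct (fwd_a r Hr 0%nat (proj2 HL)) as [E1 _]. rewrite E1 in H5.
  apply is_first_lbl in H5; [|apply Nat.mod_upper_bound; lia].
  assert (Hx : X ((r + m) mod n) (pi2 (r, 0%nat)) = X ((r + m) mod n) 0) by (inversion H5; auto).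
  destruct (piL _ HL) as [A1 A2]. simpl in A1, A2. rewrite E1 in A2.
  destruct (Nat.eq_dec (pi2 (r, 0%nat)) 0); auto. exfalso.
  assert (Hlt : X ((r + m) mod n) 0 < X ((r + m) mod n) (pi2 (r, 0%nat))) by (apply HXincf; auto; [apply Nat.mod_upper_bound; lia|lia]).
  lra.
Qed.

Lemma pi_r0 r : (0 < r < n)%nat -> pi (r, 0%nat) = (((r + m) mod n)%nat, 0%nat).
Proof.
  intros Hr. destruct (fwd_a r Hr 0%nat (HNpos' r ltac:(lia))) as [E1 _].
  rewrite (surjective_pairing (pi (r, 0%nat))). rewrite E1, fwd_a2; auto.
Qed.

Lemma L00 : L (0%nat, 0%nat).
Proof. split; simpl. lia. apply HNpos'. lia. Qed.

Lemma pi00_ne : pi (0%nat, 0%nat) <> (0%nat, 0%nat).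
Proof.
  intros E. assert (Hall : forall j, Nat.iter j pi (0%nat, 0%nat) = (0%nat, 0%nat)).
  { induction j; simpl; auto. rewrite IHj. auto. }
  assert (HL1 : L (1%nat, 0%nat)) by (split; simpl; [lia|apply HNpos'; lia]).
  destruct (cyc_reach n d HD _ _ L00 HL1) as [j Hj]. rewrite Hall in Hj. discriminate.
Qed.

Lemma X_ge0 r s : (r < n)%nat -> (s < N r)%nat -> 0 <= X r s.
Proof. intros. apply HX01f; auto. Qed.

Lemma X0_min r s : (r < n)%nat -> (s < N r)%nat -> X r 0 <= X r s.
Proof. intros. destruct s. lra. left. apply HXincf; auto. lia. Qed.

Lemma X00_pos : 0 < X 0 0.
Proof.
  pose proof (X_ge0 0 0 ltac:(lia) (HNpos' 0 ltac:(lia))) as H0.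
  destruct (Rle_lt_or_eq_dec _ _ H0) as [|E]; auto. exfalso.
  pose proof (fmapX 0 0 ltac:(lia) (HNpos' 0 ltac:(lia))) as F. rewrite <- E in F.
  rewrite (fmap_e0_bd n m 0 0) in F by (simpl; try lra; lia). simpl in F.
  assert (E1 : pi1 (0%nat, 0%nat) = 0%nat) by (inversion F; auto).
  assert (E2 : X (pi1 (0%nat, 0%nat)) (pi2 (0%nat, 0%nat)) = 0) by (inversion F; auto).
  destruct (piL _ L00) as [A1 A2]. simpl in A1, A2. rewrite E1 in A2, E2.
  apply pi00_ne. rewrite (surjective_pairing (pi (0%nat, 0%nat))). rewrite E1. f_equal.
  destruct (Nat.eq_dec (pi2 (0%nat, 0%nat)) 0); auto. exfalso.
  assert (X 0 0 < X 0 (pi2 (0%nat, 0%nat))) by (apply HXincf; auto; lia). lra.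
Qed.

Lemma chain_zero r : (0 < r < n)%nat -> X r 0 = 0 -> X 0 0 = 0.
Proof.
  intros Hr HX. assert (HL : L (r, 0%nat)) by (split; simpl; [lia|apply HNpos'; lia]).
  destruct (cyc_reach n d HD _ _ HL L00) as [i Hi].
  revert r Hr HX HL Hi. induction i as [|i IH]; intros r Hr HX HL Hi.
  - simpl in Hi. inversion Hi. lia.
  - rewrite Nat.iter_succ_r in Hi. rewrite pi_r0 in Hi by auto.
    destruct (fwd_a r Hr 0%nat (proj2 HL)) as [E1 E2]. rewrite E1, fwd_a2 in E2 by auto.
    set (r' := ((r + m) mod n)%nat) in *.
    assert (Hr' : (r' < n)%nat) by (apply Nat.mod_upper_bound; lia).
    destruct (Nat.eq_dec r' 0) as [E0|E0].
    + rewrite E0 in E2. lra.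
    + apply (IH r'); auto. lia. lra. split; simpl; auto. apply HNpos'; auto.
Qed.

Definition pf (s : nat) : nat := floorN (MM m * X 0 s).

Lemma piece_info s : (s < N 0)%nat ->
  (pf s <= 2 * m)%nat /\ INR (pf s) < MM m * X 0 s < INR (pf s) + 1 /\
  pi1 (0%nat, s) = edge (pf s) /\ X (pi1 (0%nat, s)) (pi2 (0%nat, s)) = aff m (pf s) (X 0 s).
Proof.
  intros Hs. pose proof (HX01f 0 s ltac:(lia) Hs) as Ht.
  assert (Hp : (pf s <= 2 * m)%nat) by (apply floorN_le2m; auto).
  assert (HM : 0 < MM m) by (unfold MM; apply lt_0_INR; lia).
  pose proof (floorN_spec (MM m * X 0 s) ltac:(nra)) as [F1 F2]. fold (pf s) in F1, F2.
  pose proof (fmapX 0 s ltac:(lia) Hs) as F.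
  destruct (piL (0%nat, s) ltac:(split; simpl; auto; lia)) as [A1 A2]. simpl in A1, A2.
  destruct (Rle_lt_or_eq_dec _ _ F1) as [Hlt|Heq].
  - rewrite (fmap_e0 n m (pf s) (X 0 s) Hp (conj Hlt F2)) in F.
    assert (E1 : edge (pf s) = pi1 (0%nat, s)) by (inversion F; auto).
    assert (E2 : aff m (pf s) (X 0 s) = X (pi1 (0%nat, s)) (pi2 (0%nat, s))) by (inversion F; auto).
    split; auto.
  - exfalso. rewrite (fmap_e0_bd n m (pf s) (X 0 s) Heq Hp) in F.
    pose proof X00_pos as HX0.
    destruct (Nat.eqb (pf s) 0) eqn:Ep.
    + apply Nat.eqb_eq in Ep. rewrite Ep in Heq. simpl in Heq.
      assert (X 0 s = 0) by nra. pose proof (X0_min 0 s ltac:(lia) Hs). lra.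
    + destruct (Nat.odd (pf s)) eqn:Eo; [discriminate|].
      assert (E1 : (pf s / 2)%nat = pi1 (0%nat, s)) by (inversion F; auto).
      assert (E2 : 0 = X (pi1 (0%nat, s)) (pi2 (0%nat, s))) by (inversion F; auto).
      apply Nat.eqb_neq in Ep.
      set (j := ((pf s) / 2)%nat) in *.
      assert (Hj : (0 < j)%nat).
      { unfold j. destruct (odd_cases (pf s)) as [[Ho _]|[_ [q Hq]]]; [congruence|].
        rewrite Hq. rewrite Nat.mul_comm, Nat.div_mul; lia. }
      rewrite <- E1 in A2. rewrite <- E1 in A1.
      assert (Hz : X j 0 = 0).
      { pose proof (X0_min j (pi2 (0%nat, s)) A1 A2). pose proof (X_ge0 j 0 A1 (HNpos' j A1)). rewrite <- E1 in E2. unfold j in *. lra. }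
      apply (chain_zero j) in Hz; [lra|lia].
Qed.

Lemma fwd_b2 : pi1 (0%nat, 0%nat) = k.
Proof.
  destruct HcalP as [_ H]. assert (Hf : is_first P 0 (Ed 0 (X 0 0))) by (apply is_first_lbl; [lia|reflexivity]).
  destruct (H _ Hf) as [Hon _]. rewrite (fmapX 0 0 ltac:(lia) (HNpos' 0 ltac:(lia))) in Hon.
  destruct Hon as [E|[t E]]; [discriminate|]. inversion E. auto.
Qed.

Lemma fwd_b1 : dlab d 0%nat = g.
Proof.
  destruct HcalP as [_ H]. assert (Hf : is_first P 0 (Ed 0 (X 0 0))) by (apply is_first_lbl; [lia|reflexivity]).
  destruct (H _ Hf) as [_ Hb]. apply (L5 0 (HNpos' 0 ltac:(lia))). rewrite lbl_eq by (try lia; apply HNpos'; lia). auto.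
Qed.

Lemma low_img s : (s < N 0)%nat -> pi2 (0%nat, s) = 0%nat -> pi1 (0%nat, s) = m /\ (0 < s)%nat.
Proof.
  intros Hs H2. destruct (piece_info s Hs) as [Hp [_ [Hj _]]].
  assert (Hjm : (pi1 (0%nat, s) <= m)%nat) by (rewrite Hj; unfold edge; pose proof (half_spec (pf s + 1)); lia).
  assert (HLs : L (0%nat, s)) by (split; simpl; auto; lia).
  assert (Hm' : pi1 (0%nat, s) = m).
  { destruct (Nat.eq_dec (pi1 (0%nat, s)) m) as [|Hne]; auto. exfalso.
    set (j := pi1 (0%nat, s)) in *.
    set (r := (j + n - m)%nat).
    assert (Hr : (0 < r < n)%nat) by (unfold r; lia).
    assert (HLr : L (r, 0%nat)) by (split; simpl; [lia|apply HNpos'; lia]).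
    assert (Hpr : pi (r, 0%nat) = pi (0%nat, s)).
    { rewrite pi_r0 by auto. rewrite (surjective_pairing (pi (0%nat, s))). fold j. rewrite H2.
      f_equal. unfold r. rewrite mod_big; lia. }
    apply pi_inj in Hpr; auto. inversion Hpr. lia. }
  split; auto. destruct s; [|lia]. exfalso. rewrite fwd_b2 in Hm'. lia.
Qed.

Lemma lab_inj s : (s < N 0)%nat -> (0 < pi2 (0%nat, s))%nat ->
  (dlab d s = cA <-> Nat.odd (pf s) = true) /\ (dlab d s = cB <-> Nat.odd (pf s) = false) /\ dlab d s <> cC.
Proof.
  intros Hs H2. destruct (piece_info s Hs) as [Hp [Hpc [Hj Hx]]].
  destruct (piL (0%nat, s) ltac:(split; simpl; auto; lia)) as [A1 A2]. simpl in A1, A2.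
  assert (Hjn : (edge (pf s) < n)%nat) by (rewrite <- Hj; auto).
  assert (Hlt : X (edge (pf s)) 0 < aff m (pf s) (X 0 s)).
  { rewrite <- Hx, <- Hj. apply HXincf; auto. }
  destruct (beh_inj n m N X P Hn2 HNpos' HX01f HXincf HPf s (pf s) Hs Hp Hpc Hjn Hlt) as [B1 [B2 B3]].
  pose proof (L5 s Hs) as H5. rewrite lbl_eq in H5 by (auto; lia).
  split; [|split].
  - rewrite (H5 cA). simpl. auto.
  - rewrite (H5 cB). simpl. auto.
  - rewrite (H5 cC). simpl. auto.
Qed.

Lemma lab_fold s : (s < N 0)%nat -> pi2 (0%nat, s) = 0%nat -> dlab d s = cC.
Proof.
  intros Hs H2. destruct (piece_info s Hs) as [Hp [Hpc [Hj Hx]]].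
  destruct (low_img s Hs H2) as [_ Hs0].
  destruct (piL (0%nat, s) ltac:(split; simpl; auto; lia)) as [A1 A2]. simpl in A1, A2.
  assert (Hjn : (edge (pf s) < n)%nat) by (rewrite <- Hj; auto).
  assert (Heq : aff m (pf s) (X 0 s) = X (edge (pf s)) 0) by (rewrite <- Hx, <- Hj, H2; auto).
  destruct (beh_fold n m N X P Hn2 HNpos' HX01f HXincf HPf s (pf s) Hs Hp Hpc Hjn Heq (or_intror Hs0)) as [B1 _].
  pose proof (L5 s Hs) as H5. rewrite lbl_eq in H5 by (auto; lia).
  apply (H5 cC). simpl. auto.
Qed.

Lemma edge_parity p j : edge p = j -> (Nat.odd p = true -> p = (2 * j - 1)%nat /\ (1 <= j)%nat) /\ (Nat.odd p = false -> p = (2 * j)%nat).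
Proof.
  intros E. unfold edge in E. destruct (odd_cases p) as [[Ho [q Hq]]|[Ho [q Hq]]]; rewrite Ho; subst p.
  - split; [|discriminate]. intros _. pose proof (half_spec (2 * q + 1 + 1)). lia.
  - split; [discriminate|]. intros _. pose proof (half_spec (2 * q + 1)). lia.
Qed.

Lemma pf_mono s1 s2 : (s1 < s2)%nat -> (s2 < N 0)%nat -> (pf s1 <= pf s2)%nat.
Proof.
  intros H12 Hs2. unfold pf. apply floorN_mono.
  assert (HM : 0 < MM m) by (unfold MM; apply lt_0_INR; lia). pose proof (X_ge0 0 s1 ltac:(lia) ltac:(lia)). nra.
  assert (HM : 0 < MM m) by (unfold MM; apply lt_0_INR; lia).
  assert (X 0 s1 < X 0 s2) by (apply HXincf; auto; lia). nra.
Qed.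

Lemma L0s s : (s < N 0)%nat -> L (0%nat, s).
Proof. intros. split; simpl; auto. lia. Qed.

Lemma fwd_b3 c : (c < N 0)%nat -> dlab d c = cC -> pi (0%nat, c) = (m, 0%nat).
Proof.
  intros Hc Hl. destruct (Nat.eq_dec (pi2 (0%nat, c)) 0) as [E|E].
  - destruct (low_img c Hc E) as [E1 _]. rewrite (surjective_pairing (pi (0%nat, c))), E1, E. auto.
  - exfalso. destruct (lab_inj c Hc ltac:(lia)) as [_ [_ H]]. auto.
Qed.

Lemma fwd_b4b s1 s2 : (s1 < s2)%nat -> (s2 < N 0)%nat -> (pi1 (0%nat, s1) <= pi1 (0%nat, s2))%nat.
Proof.
  intros H12 Hs2. destruct (piece_info s1 ltac:(lia)) as [_ [_ [E1 _]]]. destruct (piece_info s2 Hs2) as [_ [_ [E2 _]]].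
  rewrite E1, E2. unfold edge. apply Nat.Div0.div_le_mono. pose proof (pf_mono s1 s2 H12 Hs2). lia.
Qed.

Lemma fwd_b4a s : (s < N 0)%nat -> (k <= pi1 (0%nat, s) <= m)%nat.
Proof.
  intros Hs. split.
  - rewrite <- fwd_b2. destruct s. lia. apply fwd_b4b; lia.
  - destruct (piece_info s Hs) as [Hp [_ [E _]]]. rewrite E. unfold edge. pose proof (half_spec (pf s + 1)). lia.
Qed.

Lemma aff_mono_same s1 s2 : (s1 < s2)%nat -> (s2 < N 0)%nat -> pf s1 = pf s2 ->
  (Nat.odd (pf s1) = true -> X (pi1 (0%nat, s2)) (pi2 (0%nat, s2)) < X (pi1 (0%nat, s1)) (pi2 (0%nat, s1))) /\
  (Nat.odd (pf s1) = false -> X (pi1 (0%nat, s1)) (pi2 (0%nat, s1)) < X (pi1 (0%nat, s2)) (pi2 (0%nat, s2))).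
Proof.
  intros H12 Hs2 Ep. destruct (piece_info s1 ltac:(lia)) as [_ [_ [_ X1]]]. destruct (piece_info s2 Hs2) as [_ [_ [_ X2]]].
  rewrite X1, X2, <- Ep. pose proof (aff_diff m (pf s1) (X 0 s1) (X 0 s2)) as Hd.
  assert (HM : 0 < MM m) by (unfold MM; apply lt_0_INR; lia).
  assert (X 0 s1 < X 0 s2) by (apply HXincf; auto; lia).
  split; intros Ho; rewrite Ho in Hd; nra.
Qed.

Lemma idxo r a b : (r < n)%nat -> (a < N r)%nat -> (b < N r)%nat -> X r a < X r b -> (a < b)%nat.
Proof. apply (idx_order n N X Hn2 HXincf). Qed.

Lemma fwd_b5 s1 s2 : (s1 < s2)%nat -> (s2 < N 0)%nat -> pi1 (0%nat, s1) = pi1 (0%nat, s2) ->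
      (dlab d s1 = cB \/ dlab d s1 = cC) -> dlab d s2 = cB.
Proof.
  intros H12 Hs2 Ej Hl.
  assert (Hs1 : (s1 < N 0)%nat) by lia.
  destruct (piece_info s1 Hs1) as [Hp1 [_ [E1 X1]]]. destruct (piece_info s2 Hs2) as [Hp2 [_ [E2 X2]]].
  pose proof (pf_mono s1 s2 H12 Hs2) as Hpm.
  destruct (piL _ (L0s s1 Hs1)) as [A1 A2]. destruct (piL _ (L0s s2 Hs2)) as [B1 B2]. simpl in A1, A2, B1, B2.
  set (j := pi1 (0%nat, s1)) in *.
  destruct (edge_parity (pf s1) j (eq_sym E1)) as [P1o P1e].
  destruct (edge_parity (pf s2) j (eq_trans (eq_sym E2) (eq_sym Ej))) as [P2o P2e].
  destruct Hl as [Hl|Hl].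
  - assert (H2s1 : (0 < pi2 (0%nat, s1))%nat).
    { destruct (Nat.eq_dec (pi2 (0%nat, s1)) 0) as [E|E]; [|lia]. rewrite (lab_fold s1 Hs1 E) in Hl. discriminate. }
    destruct (lab_inj s1 Hs1 H2s1) as [_ [LB _]]. apply LB in Hl.
    assert (Hpe : pf s2 = pf s1).
    { specialize (P1e Hl). destruct (Nat.odd (pf s2)) eqn:O2; [destruct (P2o eq_refl); lia|]. rewrite (P2e eq_refl). auto. }
    destruct (aff_mono_same s1 s2 H12 Hs2 (eq_sym Hpe)) as [_ Hinc]. specialize (Hinc Hl).
    assert (H2s2 : (0 < pi2 (0%nat, s2))%nat).
    { destruct (Nat.eq_dec (pi2 (0%nat, s2)) 0) as [E|E]; [|lia]. exfalso.
      rewrite E, <- Ej in Hinc. fold j in Hinc. pose proof (X0_min j (pi2 (0%nat, s1)) A1 A2). lra. }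
    destruct (lab_inj s2 Hs2 H2s2) as [_ [LB2 _]]. apply LB2. rewrite Hpe. auto.
  - assert (H2s1 : pi2 (0%nat, s1) = 0%nat).
    { destruct (Nat.eq_dec (pi2 (0%nat, s1)) 0) as [E|E]; auto. destruct (lab_inj s1 Hs1 ltac:(lia)) as [_ [_ LC]]. contradiction. }
    destruct (low_img s1 Hs1 H2s1) as [Hjm _]. fold j in Hjm.
    assert (H2s2 : (0 < pi2 (0%nat, s2))%nat).
    { destruct (Nat.eq_dec (pi2 (0%nat, s2)) 0) as [E|E]; [|lia]. exfalso.
      assert (Heq : pi (0%nat, s1) = pi (0%nat, s2)).
      { rewrite (surjective_pairing (pi (0%nat, s1))), (surjective_pairing (pi (0%nat, s2))). fold j. rewrite E, H2s1, <- Ej. auto. }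
      apply pi_inj in Heq; try apply L0s; auto. inversion Heq. lia. }
    destruct (lab_inj s2 Hs2 H2s2) as [_ [LB2 _]]. apply LB2.
    destruct (Nat.odd (pf s2)) eqn:O2; auto. exfalso.
    destruct (P2o eq_refl) as [Hp2j Hj1].
    assert (Hpe : pf s1 = pf s2).
    { destruct (Nat.odd (pf s1)) eqn:O1. destruct (P1o eq_refl); lia. rewrite (P1e eq_refl) in Hpm. lia. }
    destruct (aff_mono_same s1 s2 H12 Hs2 Hpe) as [Hdec _]. rewrite Hpe in Hdec. specialize (Hdec O2).
    rewrite H2s1, <- Ej in Hdec. fold j in Hdec. pose proof (X0_min j (pi2 (0%nat, s2)) A1 ltac:(rewrite Ej; auto)). lra.
Qed.

Lemma fwd_b6 s1 s2 : (s1 < s2)%nat -> (s2 < N 0)%nat -> pi1 (0%nat, s1) = pi1 (0%nat, s2) ->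
      (dlab d s1 = cA -> dlab d s2 = cA -> (pi2 (0%nat, s1) > pi2 (0%nat, s2))%nat) /\
      (dlab d s1 = cB -> dlab d s2 = cB -> (pi2 (0%nat, s1) < pi2 (0%nat, s2))%nat).
Proof.
  intros H12 Hs2 Ej.
  assert (Hs1 : (s1 < N 0)%nat) by lia.
  destruct (piece_info s1 Hs1) as [Hp1 [_ [E1 X1]]]. destruct (piece_info s2 Hs2) as [Hp2 [_ [E2 X2]]].
  destruct (piL _ (L0s s1 Hs1)) as [A1 A2]. destruct (piL _ (L0s s2 Hs2)) as [B1 B2]. simpl in A1, A2, B1, B2.
  set (j := pi1 (0%nat, s1)) in *.
  destruct (edge_parity (pf s1) j (eq_sym E1)) as [P1o P1e].
  destruct (edge_parity (pf s2) j (eq_trans (eq_sym E2) (eq_sym Ej))) as [P2o P2e].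
  assert (Hnz : forall s, (s < N 0)%nat -> dlab d s <> cC -> (0 < pi2 (0%nat, s))%nat).
  { intros s Hs Hl. destruct (Nat.eq_dec (pi2 (0%nat, s)) 0) as [E|E]; [|lia]. exfalso. apply Hl. apply lab_fold; auto. }
  split.
  - intros La Lb.
    assert (H1 := Hnz s1 Hs1 ltac:(rewrite La; discriminate)). assert (H2 := Hnz s2 Hs2 ltac:(rewrite Lb; discriminate)).
    destruct (lab_inj s1 Hs1 H1) as [LA1 _]. destruct (lab_inj s2 Hs2 H2) as [LA2 _].
    apply LA1 in La. apply LA2 in Lb.
    assert (Hpe : pf s1 = pf s2) by (destruct (P1o La); destruct (P2o Lb); lia).
    destruct (aff_mono_same s1 s2 H12 Hs2 Hpe) as [Hdec _]. specialize (Hdec La).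
    rewrite <- Ej in Hdec. fold j in Hdec.
    apply (idxo j); auto. rewrite Ej; auto.
  - intros La Lb.
    assert (H1 := Hnz s1 Hs1 ltac:(rewrite La; discriminate)). assert (H2 := Hnz s2 Hs2 ltac:(rewrite Lb; discriminate)).
    destruct (lab_inj s1 Hs1 H1) as [_ [LB1 _]]. destruct (lab_inj s2 Hs2 H2) as [_ [LB2 _]].
    apply LB1 in La. apply LB2 in Lb.
    assert (Hpe : pf s1 = pf s2) by (rewrite (P1e La), (P2e Lb); auto).
    destruct (aff_mono_same s1 s2 H12 Hs2 Hpe) as [_ Hinc]. specialize (Hinc La).
    rewrite <- Ej in Hinc. fold j in Hinc.
    apply (idxo j); auto. rewrite Ej; auto.
Qed.

Lemma fwd_all : cond_ab n m k g d.
Proof.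
  unfold cond_ab. cbv zeta.
  split; [|split; [|split; [|split; [|split; [|split; [|split]]]]]].
  - intros r Hr. split; [|split].
    + intros s Hs. apply (fwd_a r Hr s Hs).
    + intros s1 s2 H12 Hs2. destruct (fwd_a r Hr s1 ltac:(lia)) as [E1 X1]. destruct (fwd_a r Hr s2 Hs2) as [E2 X2].
      destruct (piL (r, s1) ltac:(split; simpl; lia)) as [A1 A2]. destruct (piL (r, s2) ltac:(split; simpl; lia)) as [B1 B2].
      simpl in *. rewrite E1 in X1, A2, A1. rewrite E2 in X2, B2.
      apply (idxo ((r + m) mod n)); auto. rewrite X1, X2. apply HXincf; auto; lia.
    + apply fwd_a2; auto.
  - apply fwd_b1.
  - apply fwd_b2.
  - apply fwd_b3.
  - apply fwd_b4a.
  - apply fwd_b4b.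
  - apply fwd_b5.
  - apply fwd_b6.
Qed.

End Fwd.
End MF.
Import MF.

Open Scope R_scope.
Theorem lemma2p6 (n m k : nat) (g : cls) (d : data) :
  (0 < m)%nat -> (2 * m <= n)%nat -> Nat.gcd m n = 1%nat ->
  (k < m)%nat -> (g = cA \/ g = cB) -> (k = 0%nat -> g = cB) ->
  in_Dn n d ->
  ((exists P, in_calP n m k g P /\ data_of n m P d) <-> cond_ab n m k g d).
Proof.
  intros Hm Hmn _ Hk Hg Hk0 HD. split.
  - intros [P [HcalP [lbl [L1 [L2 [L3 [L4 L5]]]]]]].
    apply (fwd_all n m k g d P lbl); auto.
  - intros Hab. exact (rev_dir n m k g d Hm Hmn Hk Hg Hk0 HD Hab).
Qed.
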